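(* Every regular normal extremal that is time-optimal for the problem below begins with an $X$-arc; that is, the control $A$ equals $X$ on some interval $[0,\delta)$, $\delta>0$.
   Context: Fix $\gamma\in(0,\pi/2)$, $s=\sin\gamma$, $c=\cos\gamma$, and $X=\begin{pmatrix}0&s^2&sc\\-s^2&0&0\\-sc&0&0\end{pmatrix}$, $Y=\begin{pmatrix}0&1&0\\-1&0&0\\0&0&0\end{pmatrix}$ on $\mathbb R^3$ with standard basis $e_1,e_2,e_3$ and standard inner product. Let $\Sigma=\{\psi:\langle e_3,\psi\rangle=0\}$, $\psi_0=(0,s,c)^\top$ (the large-block limit of the uniform superposition). Time-optimal problem: over piecewise constant controls $A:[0,T]\to\{X,Y\}$ with finitely many discontinuities (switching times) and trajectories $\dot\psi=A(t)\psi$, $\psi(0)=\psi_0$, minimize $T$ subject to $\psi(T)\in\Sigma$. Maximal intervals on which $A\equiv X$ are $X$-arcs. A normal extremal is such a trajectory with a nonzero absolutely continuous costate $p$ satisfying $\dot p=-A(t)^\top p$ and, for a.e. $t$, $\langle p,A(t)\psi\rangle-1=\max_{B\in\{X,Y\}}(\langle p,B\psi\rangle-1)$. With $\phi_1=\langle p,(X-Y)\psi\rangle$ and $\phi_2=\langle p,[X,Y]\psi\rangle$, a normal extremal is regular (bang–bang) if $\phi_1$ vanishes only at isolated times and at every switching time $\phi_1=0$ and $\phi_2\neq0$. *)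

(* Defs.v *)
From Stdlib Require Import Reals Lra List.
Open Scope R_scope.

(* Vectors of R^3 and 3x3 matrices, indices 0,1,2 (standard basis e1,e2,e3). *)
Definition vec := nat -> R.
Definition mat := nat -> nat -> R.

Definition ip (u v : vec) : R := u 0%nat * v 0%nat + u 1%nat * v 1%nat + u 2%nat * v 2%nat.
Definition mv (M : mat) (v : vec) : vec :=
  fun i => M i 0%nat * v 0%nat + M i 1%nat * v 1%nat + M i 2%nat * v 2%nat.
Definition mmul (M N : mat) : mat :=
  fun i j => M i 0%nat * N 0%nat j + M i 1%nat * N 1%nat j + M i 2%nat * N 2%nat j.
Definition msub (M N : mat) : mat := fun i j => M i j - N i j.
Definition mopp (M : mat) : mat := fun i j => - M i j.
Definition mtr (M : mat) : mat := fun i j => M j i.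
Definition comm (M N : mat) : mat := msub (mmul M N) (mmul N M).
Definition vzero (v : vec) : Prop := v 0%nat = 0 /\ v 1%nat = 0 /\ v 2%nat = 0.

Definition matX (g : R) : mat := fun i j =>
  match i, j with
  | 0%nat, 1%nat => sin g ^ 2
  | 0%nat, 2%nat => sin g * cos g
  | 1%nat, 0%nat => - sin g ^ 2
  | 2%nat, 0%nat => - (sin g * cos g)
  | _, _ => 0
  end.
Definition matY : mat := fun i j =>
  match i, j with
  | 0%nat, 1%nat => 1
  | 1%nat, 0%nat => -1
  | _, _ => 0
  end.

Definition matA (g : R) (b : bool) : mat := if b then matX g else matY.

Definition e3 : vec := fun i => if Nat.eqb i 2 then 1 else 0.
Definition psi0 (g : R) : vec := fun i =>
  match i with 1%nat => sin g | 2%nat => cos g | _ => 0 end.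
Definition inSigma (v : vec) : Prop := ip e3 v = 0.

Definition loc_const (A : R -> bool) (T t : R) : Prop :=
  exists d, 0 < d /\ forall s, 0 <= s <= T -> Rabs (s - t) < d -> A s = A t.
Definition switching_time (A : R -> bool) (T t : R) : Prop :=
  0 <= t <= T /\ ~ loc_const A T t.
Definition admissible_control (A : R -> bool) (T : R) : Prop :=
  exists l : list R, forall t, switching_time A T t -> In t l.

Definition vcont_on (f : R -> vec) (T : R) : Prop :=
  forall (i : nat) t eps, (i < 3)%nat -> 0 <= t <= T -> 0 < eps ->
    exists d, 0 < d /\ forall s, 0 <= s <= T -> Rabs (s - t) < d ->
      Rabs (f s i - f t i) < eps.

(* For piecewise constant controls this is the
   same as an absolutely continuous (Caratheodory) solution. *)
Definition solves (A : R -> bool) (T : R) (M : bool -> mat) (f : R -> vec) : Prop :=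
  vcont_on f T /\
  forall t, 0 < t < T -> ~ switching_time A T t ->
    forall i, (i < 3)%nat -> derivable_pt_lim (fun s => f s i) t (mv (M (A t)) (f t) i).

Definition admissible (g : R) (T : R) (A : R -> bool) (psi : R -> vec) : Prop :=
  0 <= T /\ admissible_control A T /\ solves A T (matA g) psi /\
  (forall i, psi 0 i = psi0 g i) /\ inSigma (psi T).

Definition time_optimal (g : R) (T : R) (A : R -> bool) (psi : R -> vec) : Prop :=
  admissible g T A psi /\
  forall T' A' psi', admissible g T' A' psi' -> T <= T'.

Definition negligible (S : R -> Prop) : Prop :=
  forall eps, 0 < eps -> exists a b : nat -> R,
    (forall n, a n <= b n) /\
    (forall x, S x -> exists n, a n < x < b n) /\
    (forall N, sum_f_R0 (fun n => b n - a n) N < eps).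

Definition normal_extremal (g T : R) (A : R -> bool) (psi p : R -> vec) : Prop :=
  admissible g T A psi /\
  ~ (forall t, 0 <= t <= T -> vzero (p t)) /\
  solves A T (fun b => mopp (mtr (matA g b))) p /\
  negligible (fun t => 0 <= t <= T /\
    ~ (ip (p t) (mv (matA g (A t)) (psi t)) - 1 =
       Rmax (ip (p t) (mv (matX g) (psi t)) - 1) (ip (p t) (mv matY (psi t)) - 1))).

Definition phi1 (g : R) (psi p : R -> vec) (t : R) : R :=
  ip (p t) (mv (msub (matX g) matY) (psi t)).
Definition phi2 (g : R) (psi p : R -> vec) (t : R) : R :=
  ip (p t) (mv (comm (matX g) matY) (psi t)).

Definition regular (g T : R) (A : R -> bool) (psi p : R -> vec) : Prop :=
  normal_extremal g T A psi p /\
  (forall t, 0 <= t <= T -> phi1 g psi p t = 0 ->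
     exists e, 0 < e /\ forall s, 0 <= s <= T -> 0 < Rabs (s - t) < e ->
       phi1 g psi p s <> 0) /\
  (forall t, switching_time A T t -> phi1 g psi p t = 0 /\ phi2 g psi p t <> 0).

(* Main.v *)
Require Import Defs.
From Stdlib Require Import Reals Lra Lia List Classical FunctionalExtensionality.
Open Scope R_scope.


Lemma mono_nil (F D : R -> R) (a b : R) :
  a <= b ->
  (forall c, a <= c <= b -> continuity_pt F c) ->
  (forall c, a < c < b -> derivable_pt_lim F c (D c) /\ D c <= 0) ->
  F b <= F a.
Proof.
  intros Hab Hc Hd.
  destruct (Req_dec a b) as [->|Hne]; [lra|].
  assert (Hlt : a < b) by lra.
  assert (pr1 : forall c, a < c < b -> derivable_pt F c).
  { intros c Hc'. exists (D c). apply (proj1 (Hd c Hc')). }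
  assert (pr2 : forall c, a < c < b -> derivable_pt id c).
  { intros c _. apply derivable_pt_id. }
  destruct (MVT F id a b pr1 pr2 Hlt Hc) as [c [P HP]].
  { intros c _. apply derivable_continuous_pt, derivable_pt_id. }
  assert (E1 : derive_pt F c (pr1 c P) = D c).
  { apply derive_pt_eq_0. apply (proj1 (Hd c P)). }
  assert (E2 : derive_pt id c (pr2 c P) = 1).
  { apply derive_pt_eq_0. apply derivable_pt_lim_id. }
  rewrite E1, E2 in HP. unfold id in HP.
  destruct (Hd c P) as [_ Hle].
  nra.
Qed.

Lemma mono_list (F D : R -> R) (l : list R) : forall (a b : R),
  a <= b ->
  (forall c, a <= c <= b -> continuity_pt F c) ->
  (forall c, a < c < b -> ~ In c l -> derivable_pt_lim F c (D c) /\ D c <= 0) ->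
  F b <= F a.
Proof.
  induction l as [|p l IH]; intros a b Hab Hc Hd.
  - apply (mono_nil F D); auto; intros c Hc'; apply Hd; auto.
  - destruct (Rlt_dec a p) as [Hap|Hap]; [destruct (Rlt_dec p b) as [Hpb|Hpb]|].
    + assert (F p <= F a).
      { apply IH; try lra. intros c Hc'; apply Hc; lra.
        intros c Hc' Hn. apply Hd; [lra|]. intros [E|E]; [lra|tauto]. }
      assert (F b <= F p).
      { apply IH; try lra. intros c Hc'; apply Hc; lra.
        intros c Hc' Hn. apply Hd; [lra|]. intros [E|E]; [lra|tauto]. }
      lra.
    + apply IH; auto. intros c Hc' Hn. apply Hd; auto. intros [E|E]; [lra|tauto].
    + apply IH; auto. intros c Hc' Hn. apply Hd; auto. intros [E|E]; [lra|tauto].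
Qed.

Lemma le_eps (x y : R) : (forall e, 0 < e -> x <= y + e) -> x <= y.
Proof.
  intros H. destruct (Rle_dec x y) as [|Hn]; auto.
  specialize (H ((x - y)/2)). lra.
Qed.
Lemma cont_eps (f : R -> R) (x : R) : continuity_pt f x ->
  forall e, 0 < e -> exists d, 0 < d /\ forall y, Rabs (y - x) < d -> Rabs (f y - f x) < e.
Proof.
  intros H e He.
  destruct (H e He) as [d [Hd H']]. exists d. split; auto.
  intros y Hy. destruct (Req_dec y x) as [->|Hne].
  - rewrite Rminus_diag, Rabs_R0; auto.
  - specialize (H' y). simpl in H'. unfold R_dist in H'. apply H'. split; auto. unfold D_x, no_cond. split; auto.
Qed.

Lemma lub_props (E : R -> Prop) (m : R) : is_lub E m ->
  (forall x, E x -> x <= m) /\ (forall y, y < m -> exists x, E x /\ y < x).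
Proof.
  intros [Hub Hl]. split; [exact Hub|].
  intros y Hy. destruct (classic (exists x, E x /\ y < x)) as [|Hn]; auto.
  exfalso. assert (m <= y); [|lra]. apply Hl. intros x Ex.
  destruct (Rle_dec x y); auto. exfalso; apply Hn; exists x; split; auto; lra.
Qed.

Lemma first_zero (f : R -> R) (a b : R) : a < b ->
  (forall t, a <= t <= b -> continuity_pt f t) -> f a > 0 -> f b <= 0 ->
  exists tau, a < tau <= b /\ f tau = 0 /\ forall t, a <= t < tau -> f t > 0.
Proof.
  intros Hab Hc Ha Hb.
  set (E := fun x => a <= x <= b /\ forall t, a <= t <= x -> f t > 0).
  assert (HB : bound E). { exists b. intros x [Hx _]. lra. }
  assert (HE : exists x, E x). { exists a. split; [lra|]. intros t Ht. replace t with a by lra. auto. }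
  destruct (completeness E HB HE) as [m Hm].
  destruct (lub_props E m Hm) as [Hub Hlt].
  assert (Ham : a <= m). { apply Hub. destruct HE. unfold E. split; [lra|]. intros t Ht; replace t with a by lra; auto. }
  assert (Hmb : m <= b). { destruct Hm as [_ Hl]. apply Hl. intros x [Hx _]; lra. }
  assert (Hbelow : forall t, a <= t < m -> f t > 0).
  { intros t Ht. destruct (Hlt t (proj2 Ht)) as [x [[Hx1 Hx2] Htx]]. apply Hx2. lra. }
  assert (Hfm1 : f m <= 0).
  { destruct (Rle_dec (f m) 0) as [|Hn]; auto. exfalso.
    destruct (cont_eps f m (Hc m ltac:(lra)) (f m) ltac:(lra)) as [d [Hd Hd']].
    destruct (Req_dec m b) as [->|Hne]; [lra|].
    set (x := Rmin b (m + d/2)).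
    assert (Ex : E x).
    { split. unfold x; split; [apply Rle_trans with m; [lra|]; apply Rmin_glb; lra| apply Rmin_l].
      intros t Ht. destruct (Rlt_dec t m) as [Htm|Htm]; [apply Hbelow; lra|].
      assert (Rabs (f t - f m) < f m). { apply Hd'. assert (x <= m + d/2) by apply Rmin_r.
        rewrite Rabs_right; lra. }
      apply Rabs_def2 in H. lra. }
    assert (x <= m) by (apply Hub; auto).
    assert (m < x). { unfold x. apply Rmin_glb_lt; lra. } lra. }
  assert (Ham' : a < m).
  { destruct (Req_dec a m) as [E'|]; [|lra]. subst m. lra. }
  exists m. split; [lra|]. split; [|exact Hbelow].
  destruct (Rle_dec 0 (f m)) as [|Hn]; [lra|]. exfalso.
  destruct (cont_eps f m (Hc m ltac:(lra)) (- f m) ltac:(lra)) as [d [Hd Hd']].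
  set (t := Rmax a (m - d/2)).
  assert (Ht1 : a <= t) by apply Rmax_l.
  assert (Ht2 : t < m) by (apply Rmax_lub_lt; lra).
  assert (Ht3 : m - d/2 <= t) by apply Rmax_r.
  assert (f t > 0) by (apply Hbelow; lra).
  assert (Rabs (f t - f m) < - f m) by (apply Hd'; rewrite Rabs_left; lra).
  apply Rabs_def2 in H0. lra.
Qed.

Lemma last_nonpos (f : R -> R) (a b : R) : a < b ->
  (forall t, a <= t <= b -> continuity_pt f t) -> f a <= 0 -> f b > 0 ->
  exists tau, a <= tau < b /\ f tau = 0 /\ (forall t, a <= t <= tau -> f t <= 0) /\
    forall eta, 0 < eta -> exists t, tau < t < tau + eta /\ t <= b /\ f t > 0.
Proof.
  intros Hab Hc Ha Hb.
  set (E := fun x => a <= x <= b /\ forall t, a <= t <= x -> f t <= 0).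
  assert (HB : bound E). { exists b. intros x [Hx _]. lra. }
  assert (Ea : E a). { split; [lra|]. intros t Ht. replace t with a by lra. auto. }
  destruct (completeness E HB (ex_intro _ a Ea)) as [m Hm].
  destruct (lub_props E m Hm) as [Hub Hlt].
  assert (Ham : a <= m) by (apply Hub; auto).
  assert (Hmb : m <= b). { destruct Hm as [_ Hl]. apply Hl. intros x [Hx _]; lra. }
  assert (Hbelow : forall t, a <= t < m -> f t <= 0).
  { intros t Ht. destruct (Hlt t (proj2 Ht)) as [x [[Hx1 Hx2] Htx]]. apply Hx2. lra. }
  assert (Hfm : f m <= 0).
  { destruct (Rle_dec (f m) 0) as [|Hn]; auto. exfalso.
    destruct (cont_eps f m (Hc m ltac:(lra)) (f m) ltac:(lra)) as [d [Hd Hd']].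
    destruct (Req_dec a m) as [<-|Hne]; [lra|].
    set (t := Rmax a (m - d/2)).
    assert (Ht1 : a <= t) by apply Rmax_l.
    assert (Ht2 : t < m) by (apply Rmax_lub_lt; lra).
    assert (Ht3 : m - d/2 <= t) by apply Rmax_r.
    assert (f t <= 0) by (apply Hbelow; lra).
    assert (Rabs (f t - f m) < f m) by (apply Hd'; rewrite Rabs_left; lra).
    apply Rabs_def2 in H0. lra. }
  assert (Hmb' : m < b). { destruct (Req_dec m b) as [->|]; [lra|lra]. }
  assert (Hall : forall t, a <= t <= m -> f t <= 0).
  { intros t Ht. destruct (Req_dec t m) as [->|]; auto. apply Hbelow; lra. }
  assert (Heta : forall eta, 0 < eta -> exists t, m < t < m + eta /\ t <= b /\ f t > 0).
  { intros eta Heta. apply NNPP. intros Hn.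
    set (x := Rmin b (m + eta/2)).
    assert (Ex : E x).
    { split. unfold x; split; [apply Rle_trans with m; [lra|]; apply Rmin_glb; lra| apply Rmin_l].
      intros t Ht. destruct (Rle_dec t m) as [Htm|Htm]; [apply Hall; lra|].
      destruct (Rle_dec (f t) 0) as [|Hft]; auto. exfalso. apply Hn. exists t.
      assert (x <= m + eta/2) by apply Rmin_r. repeat split; try lra.
      assert (x <= b) by apply Rmin_l. lra. }
    assert (x <= m) by (apply Hub; auto).
    assert (m < x). { unfold x. apply Rmin_glb_lt; lra. } lra. }
  exists m. split; [lra|]. split; [|split; auto].
  destruct (Rle_dec 0 (f m)) as [|Hn]; [lra|]. exfalso.
  destruct (cont_eps f m (Hc m ltac:(lra)) (- f m) ltac:(lra)) as [d [Hd Hd']].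
  destruct (Heta d Hd) as [t [Ht [Htb Hft]]].
  assert (Rabs (f t - f m) < - f m) by (apply Hd'; rewrite Rabs_right; lra).
  apply Rabs_def2 in H. lra.
Qed.

Lemma last_eq (f : R -> R) (a b v : R) : a <= b ->
  (forall t, a <= t <= b -> continuity_pt f t) -> f a = v ->
  exists tau, a <= tau <= b /\ f tau = v /\ forall t, tau < t <= b -> f t <> v.
Proof.
  intros Hab Hc Ha.
  set (E := fun x => a <= x <= b /\ f x = v).
  assert (HB : bound E). { exists b. intros x [Hx _]. lra. }
  assert (Ea : E a). { split; [lra|auto]. }
  destruct (completeness E HB (ex_intro _ a Ea)) as [m Hm].
  destruct (lub_props E m Hm) as [Hub Hlt].
  assert (Ham : a <= m) by (apply Hub; auto).
  assert (Hmb : m <= b). { destruct Hm as [_ Hl]. apply Hl. intros x [Hx _]; lra. }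
  exists m. split; [lra|]. split.
  - destruct (Req_dec (f m) v) as [|Hne]; auto. exfalso.
    assert (He : 0 < Rabs (f m - v)) by (apply Rabs_pos_lt; lra).
    destruct (cont_eps f m (Hc m ltac:(lra)) _ He) as [d [Hd Hd']].
    destruct (Hlt (m - d) ltac:(lra)) as [x [[Hx1 Hx2] Hxm]].
    assert (x <= m) by (apply Hub; split; auto).
    assert (Rabs (f x - f m) < Rabs (f m - v)) by (apply Hd'; rewrite Rabs_left1; lra).
    rewrite Hx2 in H0. rewrite <- Rabs_Ropp in H0. replace (- (v - f m)) with (f m - v) in H0 by ring. lra.
  - intros t Ht Hft. assert (t <= m) by (apply Hub; split; [lra|auto]). lra.
Qed.
Definition cl (T t : R) : R := Rmax 0 (Rmin T t).
Definition P (psi : R -> vec) (T : R) (i : nat) (t : R) : R := psi (cl T t) i.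

Lemma cl_in T t : 0 <= T -> 0 <= cl T t <= T.
Proof. intros H. unfold cl. split; [apply Rmax_l|]. apply Rmax_lub; [lra|apply Rmin_l]. Qed.

Lemma cl_id T t : 0 <= t <= T -> cl T t = t.
Proof. intros H. unfold cl. rewrite Rmin_right by lra. rewrite Rmax_right; lra. Qed.

Lemma cl_lip T x y : 0 <= T -> Rabs (cl T y - cl T x) <= Rabs (y - x).
Proof.
  intros HT. unfold cl, Rmax, Rmin.
  repeat destruct Rle_dec; repeat destruct Rabs_case_ok; try lra;
  unfold Rabs; repeat destruct Rcase_abs; lra.
Qed.

Lemma eps_cont (f : R -> R) (x : R) :
  (forall e, 0 < e -> exists d, 0 < d /\ forall y, Rabs (y - x) < d -> Rabs (f y - f x) < e) ->
  continuity_pt f x.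
Proof.
  intros H. unfold continuity_pt, continue_in, limit1_in, limit_in. simpl. unfold R_dist.
  intros e He. destruct (H e He) as [d [Hd H']]. exists d. split; auto.
  intros y [_ Hy]. apply H'; auto.
Qed.

Lemma P_cont psi T i t : 0 <= T -> vcont_on psi T -> (i < 3)%nat -> continuity_pt (P psi T i) t.
Proof.
  intros HT Hv Hi. apply eps_cont. intros e He.
  destruct (Hv i (cl T t) e Hi (cl_in T t HT) He) as [d [Hd H']].
  exists d. split; auto. intros y Hy. unfold P. apply H'. apply cl_in; auto.
  eapply Rle_lt_trans; [apply cl_lip; auto|auto].
Qed.


Lemma ccplus (f h : R -> R) x : continuity_pt f x -> continuity_pt h x -> continuity_pt (fun y => f y + h y) x.
Proof. intros; apply (continuity_pt_plus f h); auto. Qed.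
Lemma ccminus (f h : R -> R) x : continuity_pt f x -> continuity_pt h x -> continuity_pt (fun y => f y - h y) x.
Proof. intros; apply (continuity_pt_minus f h); auto. Qed.
Lemma ccmult (f h : R -> R) x : continuity_pt f x -> continuity_pt h x -> continuity_pt (fun y => f y * h y) x.
Proof. intros; apply (continuity_pt_mult f h); auto. Qed.
Lemma ccconst (a x : R) : continuity_pt (fun _ => a) x.
Proof. apply continuity_pt_const. intros ? ?; reflexivity. Qed.
Lemma ccid x : continuity_pt (fun y => y) x.
Proof. apply derivable_continuous_pt, derivable_pt_id. Qed.
Lemma continuity_pt_ext (f h : R -> R) x : (forall y, f y = h y) -> continuity_pt f x -> continuity_pt h x.
Proof. intros E H. replace h with f; auto. apply functional_extensionality; auto. Qed.
Lemma ccpow2 (f : R -> R) x : continuity_pt f x -> continuity_pt (fun y => f y ^ 2) x.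
Proof. intros H. apply (continuity_pt_ext (fun y => f y * f y)). { intros; ring. } apply ccmult; auto. Qed.
Lemma ccopp (f : R -> R) x : continuity_pt f x -> continuity_pt (fun y => - f y) x.
Proof. intros; apply (continuity_pt_opp f); auto. Qed.
Lemma ccdiv (f h : R -> R) x : continuity_pt f x -> continuity_pt h x -> h x <> 0 -> continuity_pt (fun y => f y / h y) x.
Proof. intros; apply (continuity_pt_div f h); auto. Qed.
Lemma cccomp (f h : R -> R) x : continuity_pt f x -> continuity_pt h (f x) -> continuity_pt (fun y => h (f y)) x.
Proof. intros H1 H2. apply (continuity_pt_comp f h); auto. Qed.
Lemma ccscal (a : R) (f : R -> R) x : continuity_pt f x -> continuity_pt (fun y => a * f y) x.
Proof. intros; apply ccmult; auto; apply ccconst. Qed.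

Lemma dplus (f h : R -> R) t l1 l2 : derivable_pt_lim f t l1 -> derivable_pt_lim h t l2 ->
  derivable_pt_lim (fun y => f y + h y) t (l1 + l2).
Proof. intros; apply (derivable_pt_lim_plus f h); auto. Qed.
Lemma dminus (f h : R -> R) t l1 l2 : derivable_pt_lim f t l1 -> derivable_pt_lim h t l2 ->
  derivable_pt_lim (fun y => f y - h y) t (l1 - l2).
Proof. intros; apply (derivable_pt_lim_minus f h); auto. Qed.
Lemma dmult (f h : R -> R) t l1 l2 : derivable_pt_lim f t l1 -> derivable_pt_lim h t l2 ->
  derivable_pt_lim (fun y => f y * h y) t (l1 * h t + f t * l2).
Proof. intros; apply (derivable_pt_lim_mult f h); auto. Qed.
Lemma dconst (a t : R) : derivable_pt_lim (fun _ => a) t 0.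
Proof. apply derivable_pt_lim_const. Qed.
Lemma did t : derivable_pt_lim (fun y => y) t 1.
Proof. apply derivable_pt_lim_id. Qed.
Lemma dscal (a : R) (f : R -> R) t l : derivable_pt_lim f t l -> derivable_pt_lim (fun y => a * f y) t (a * l).
Proof. intros; apply (derivable_pt_lim_scal f); auto. Qed.
Lemma dopp (f : R -> R) t l : derivable_pt_lim f t l -> derivable_pt_lim (fun y => - f y) t (- l).
Proof. intros; apply (derivable_pt_lim_opp f); auto. Qed.
Lemma dpow2 (f : R -> R) t l : derivable_pt_lim f t l -> derivable_pt_lim (fun y => f y ^ 2) t (2 * f t * l).
Proof. intros H. apply (derivable_pt_lim_ext (fun y => f y * f y)). { intros; ring. }
  replace (2 * f t * l) with (l * f t + f t * l) by ring. apply dmult; auto. Qed.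
Lemma ddiv (f h : R -> R) t l1 l2 : derivable_pt_lim f t l1 -> derivable_pt_lim h t l2 -> h t <> 0 ->
  derivable_pt_lim (fun y => f y / h y) t ((l1 * h t - l2 * f t) / (h t)²).
Proof. intros; apply (derivable_pt_lim_div f h); auto. Qed.
Lemma dcomp (f h : R -> R) t l1 l2 : derivable_pt_lim f t l1 -> derivable_pt_lim h (f t) l2 ->
  derivable_pt_lim (fun y => h (f y)) t (l2 * l1).
Proof. intros H1 H2. apply (derivable_pt_lim_comp f h); auto. Qed.
Lemma dext (f : R -> R) t l l' : derivable_pt_lim f t l -> l = l' -> derivable_pt_lim f t l'.
Proof. intros H ->; auto. Qed.

Definition good (A : R -> bool) (T t : R) : Prop := 0 < t < T /\ ~ switching_time A T t.

Lemma P_deriv g T A psi i t : solves A T (matA g) psi -> good A T t -> (i < 3)%nat ->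
  derivable_pt_lim (P psi T i) t (mv (matA g (A t)) (psi t) i).
Proof.
  intros [_ Hs] [Ht Hn] Hi.
  apply (derivable_pt_lim_locally_ext (fun s => psi s i) _ t 0 T); auto.
  - intros z Hz. unfold P. rewrite cl_id; auto; lra.
Qed.

Definition X1 psi T t := P psi T 0 t.
Definition Wf g psi T t := sin g * P psi T 1 t + cos g * P psi T 2 t.
Definition Qf g psi T t := cos g * P psi T 1 t - sin g * P psi T 2 t.

Lemma P_eq psi T i t : 0 <= t <= T -> P psi T i t = psi t i.
Proof. intros H. unfold P. rewrite cl_id; auto. Qed.

Lemma sc1 g : sin g ^ 2 + cos g ^ 2 = 1.
Proof. pose proof (sin2_cos2 g). unfold Rsqr in H. lra. Qed.

Lemma X1_deriv g T A psi t : solves A T (matA g) psi -> good A T t ->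
  derivable_pt_lim (X1 psi T) t
    (if A t then sin g * Wf g psi T t else sin g * Wf g psi T t + cos g * Qf g psi T t).
Proof.
  intros Hs Hg. pose proof (P_deriv g T A psi 0%nat t Hs Hg ltac:(lia)) as H.
  assert (Ht : 0 <= t <= T) by (destruct Hg; lra).
  unfold X1, Wf, Qf. rewrite !(P_eq psi T _ t Ht).
  eapply derivable_pt_lim_ext; [intros; reflexivity|].
  replace (if A t then _ else _) with (mv (matA g (A t)) (psi t) 0%nat); auto.
  pose proof (sc1 g) as E.
  unfold mv, matA, matX, matY. destruct (A t); simpl.
  - ring.
  - transitivity ((sin g ^ 2 + cos g ^ 2) * psi t 1%nat); [rewrite E|]; ring.
Qed.

Lemma dlin2 (f h : R -> R) (a b t l1 l2 : R) :
  derivable_pt_lim f t l1 -> derivable_pt_lim h t l2 ->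
  derivable_pt_lim (fun x => a * f x + b * h x) t (a * l1 + b * l2).
Proof.
  intros H1 H2.
  apply (derivable_pt_lim_ext (plus_fct (mult_real_fct a f) (mult_real_fct b h))).
  { intros z; reflexivity. }
  apply derivable_pt_lim_plus; apply derivable_pt_lim_scal; auto.
Qed.

Lemma W_deriv g T A psi t : solves A T (matA g) psi -> good A T t ->
  derivable_pt_lim (Wf g psi T) t (- sin g * X1 psi T t).
Proof.
  intros Hs Hg.
  pose proof (P_deriv g T A psi 1%nat t Hs Hg ltac:(lia)) as H1.
  pose proof (P_deriv g T A psi 2%nat t Hs Hg ltac:(lia)) as H2.
  assert (Ht : 0 <= t <= T) by (destruct Hg; lra).
  pose proof (dlin2 _ _ (sin g) (cos g) t _ _ H1 H2) as H.
  unfold Wf. eapply derivable_pt_lim_ext; [intros; reflexivity|].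
  replace (- sin g * X1 psi T t) with
    (sin g * mv (matA g (A t)) (psi t) 1%nat + cos g * mv (matA g (A t)) (psi t) 2%nat); auto.
  unfold X1. rewrite (P_eq psi T _ t Ht).
  pose proof (sc1 g) as E.
  unfold mv, matA, matX, matY. destruct (A t); simpl.
  - transitivity (- sin g * (sin g ^ 2 + cos g ^ 2) * psi t 0%nat); [|rewrite E]; ring.
  - ring.
Qed.

Lemma Q_deriv g T A psi t : solves A T (matA g) psi -> good A T t ->
  derivable_pt_lim (Qf g psi T) t (if A t then 0 else - cos g * X1 psi T t).
Proof.
  intros Hs Hg.
  pose proof (P_deriv g T A psi 1%nat t Hs Hg ltac:(lia)) as H1.
  pose proof (P_deriv g T A psi 2%nat t Hs Hg ltac:(lia)) as H2.
  assert (Ht : 0 <= t <= T) by (destruct Hg; lra).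
  pose proof (dlin2 _ _ (cos g) (- sin g) t _ _ H1 H2) as H.
  unfold Qf. apply (derivable_pt_lim_ext (fun x => cos g * P psi T 1 x + - sin g * P psi T 2 x)); [intros; ring|].
  replace (if A t then 0 else - cos g * X1 psi T t) with
    (cos g * mv (matA g (A t)) (psi t) 1%nat + - sin g * mv (matA g (A t)) (psi t) 2%nat); auto.
  unfold X1. rewrite (P_eq psi T _ t Ht).
  unfold mv, matA, matX, matY. destruct (A t); simpl; ring.
Qed.

Lemma N_deriv g T A psi t : solves A T (matA g) psi -> good A T t ->
  derivable_pt_lim (fun x => P psi T 0 x ^ 2 + P psi T 1 x ^ 2 + P psi T 2 x ^ 2) t 0.
Proof.
  intros Hs Hg.
  pose proof (P_deriv g T A psi 0%nat t Hs Hg ltac:(lia)) as H0.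
  pose proof (P_deriv g T A psi 1%nat t Hs Hg ltac:(lia)) as H1.
  pose proof (P_deriv g T A psi 2%nat t Hs Hg ltac:(lia)) as H2.
  assert (Ht : 0 <= t <= T) by (destruct Hg; lra).
  assert (Hsq : forall f l, derivable_pt_lim f t l -> derivable_pt_lim (fun x => f x ^ 2) t (2 * f t * l)).
  { intros f l Hf. apply (derivable_pt_lim_ext (mult_fct f f)). { intros z; unfold mult_fct; ring. }
    replace (2 * f t * l) with (l * f t + f t * l) by ring. apply derivable_pt_lim_mult; auto. }
  pose proof (derivable_pt_lim_plus _ _ _ _ _ (derivable_pt_lim_plus _ _ _ _ _ (Hsq _ _ H0) (Hsq _ _ H1)) (Hsq _ _ H2)) as H.
  eapply derivable_pt_lim_ext; [intros; reflexivity|].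
  replace 0 with (2 * P psi T 0 t * mv (matA g (A t)) (psi t) 0%nat + 2 * P psi T 1 t * mv (matA g (A t)) (psi t) 1%nat + 2 * P psi T 2 t * mv (matA g (A t)) (psi t) 2%nat); auto.
  rewrite !(P_eq psi T _ t Ht).
  unfold mv, matA, matX, matY. destruct (A t); simpl; ring.
Qed.


Lemma mono_good A T (F D : R -> R) a b : admissible_control A T -> 0 <= a -> a <= b -> b <= T ->
  (forall c, a <= c <= b -> continuity_pt F c) ->
  (forall c, a < c < b -> good A T c -> derivable_pt_lim F c (D c) /\ D c <= 0) ->
  F b <= F a.
Proof.
  intros [l Hl] Ha Hab Hb Hc Hd.
  apply (mono_list F D l a b Hab Hc).
  intros c Hc' Hn. apply Hd; auto. split; [lra|]. intros Hsw. apply Hn, Hl, Hsw.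
Qed.

Lemma P_cl psi T i t : 0 <= T -> P psi T i (cl T t) = P psi T i t.
Proof. intros HT. unfold P. rewrite (cl_id T (cl T t)); auto. apply cl_in; auto. Qed.

Lemma norm1 g T A psi t : admissible g T A psi ->
  P psi T 0 t ^ 2 + P psi T 1 t ^ 2 + P psi T 2 t ^ 2 = 1.
Proof.
  intros [HT [Hac [Hs [H0 _]]]].
  set (N := fun x => P psi T 0 x ^ 2 + P psi T 1 x ^ 2 + P psi T 2 x ^ 2).
  change (N t = 1).
  assert (HN0 : N 0 = 1).
  { unfold N. rewrite !P_eq by lra. rewrite !H0. unfold psi0. simpl. pose proof (sc1 g). lra. }
  assert (Hc : forall x, continuity_pt N x).
  { intros x. unfold N.
    repeat apply ccplus; apply ccpow2; apply P_cont; auto; destruct Hs; auto. }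
  assert (Hu : forall u, 0 <= u <= T -> N u = 1).
  { intros u Hu.
    assert (N u <= N 0).
    { apply (mono_good A T N (fun _ => 0) 0 u); auto; try lra.
      intros c _ Hg. split; [|lra]. apply (N_deriv g T A psi c Hs Hg). }
    assert ((fun x => - N x) u <= (fun x => - N x) 0).
    { apply (mono_good A T (fun x => - N x) (fun _ => 0) 0 u); auto; try lra.
      - intros c _. apply ccopp; auto.
      - intros c _ Hg. split; [|lra]. replace 0 with (- 0) by ring.
        apply dopp. apply (N_deriv g T A psi c Hs Hg). }
    simpl in *. lra. }
  assert (E : N t = N (cl T t)). { unfold N. rewrite !P_cl; auto. }
  rewrite E. apply Hu. apply cl_in; auto.
Qed.

Lemma norm1' g T A psi t : admissible g T A psi ->
  X1 psi T t ^ 2 + Wf g psi T t ^ 2 + Qf g psi T t ^ 2 = 1.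
Proof.
  intros H. pose proof (norm1 g T A psi t H) as N. pose proof (sc1 g) as E.
  unfold X1, Wf, Qf. rewrite <- N.
  transitivity (P psi T 0 t ^ 2 + (sin g ^ 2 + cos g ^ 2) * (P psi T 1 t ^ 2 + P psi T 2 t ^ 2)); [ring|].
  rewrite E; ring.
Qed.

Lemma P2_WQ g psi T t : P psi T 2 t = cos g * Wf g psi T t - sin g * Qf g psi T t.
Proof.
  pose proof (sc1 g) as E. unfold Wf, Qf.
  transitivity ((sin g ^ 2 + cos g ^ 2) * P psi T 2 t); [rewrite E; ring|ring].
Qed.

Lemma P1_WQ g psi T t : P psi T 1 t = sin g * Wf g psi T t + cos g * Qf g psi T t.
Proof.
  pose proof (sc1 g) as E. unfold Wf, Qf.
  transitivity ((sin g ^ 2 + cos g ^ 2) * P psi T 1 t); [rewrite E; ring|ring].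
Qed.

Lemma sq_le1 x y z : x ^ 2 + y ^ 2 + z ^ 2 = 1 -> -1 <= x <= 1.
Proof. intros H. split; nra. Qed.

Lemma bnds g T A psi t : admissible g T A psi ->
  -1 <= X1 psi T t <= 1 /\ -1 <= Wf g psi T t <= 1 /\ -1 <= Qf g psi T t <= 1.
Proof.
  intros H. pose proof (norm1' g T A psi t H) as N.
  split; [|split]; split; nra.
Qed.

Lemma X1_cont g T A psi t : admissible g T A psi -> continuity_pt (X1 psi T) t.
Proof. intros [HT [_ [[Hv _] _]]]. apply P_cont; auto. Qed.
Lemma P_cont' g T A psi i t : admissible g T A psi -> (i < 3)%nat -> continuity_pt (P psi T i) t.
Proof. intros [HT [_ [[Hv _] _]]] Hi. apply P_cont; auto. Qed.
Lemma W_cont g T A psi t : admissible g T A psi -> continuity_pt (Wf g psi T) t.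
Proof. intros H. unfold Wf. apply ccplus; apply ccscal; apply (P_cont' g T A psi); auto. Qed.
Lemma Q_cont g T A psi t : admissible g T A psi -> continuity_pt (Qf g psi T) t.
Proof. intros H. unfold Qf. apply ccminus; apply ccscal; apply (P_cont' g T A psi); auto. Qed.

Lemma sc_pos g : 0 < g < PI / 2 -> 0 < sin g /\ 0 < cos g.
Proof. intros H. split; [apply sin_gt_0|apply cos_gt_0]; lra. Qed.

Lemma first_hit g T A psi : 0 < g < PI / 2 -> admissible g T A psi ->
  exists T1, 0 < T1 <= T /\ P psi T 2 T1 = 0 /\ forall t, 0 <= t < T1 -> P psi T 2 t > 0.
Proof.
  intros Hg H. pose proof (sc_pos g Hg) as [Hs Hc].
  destruct H as [HT [Hac [Hso [H0 HS]]]] eqn:EH.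
  assert (F0 : P psi T 2 0 = cos g). { rewrite P_eq by lra. rewrite H0. reflexivity. }
  assert (FT : P psi T 2 T = 0).
  { rewrite P_eq by lra. unfold inSigma, ip, e3 in HS. simpl in HS. lra. }
  assert (HT' : 0 < T). { destruct (Req_dec T 0) as [E|]; [|lra]. rewrite E in FT at 2. lra. }
  destruct (first_zero (P psi T 2) 0 T HT') as [T1 [H1 [H2 H3]]]; try lra.
  - intros; apply (P_cont' g T A psi); auto.
  - exists T1; auto.
Qed.

Lemma W0 g T A psi : admissible g T A psi -> Wf g psi T 0 = 1.
Proof.
  intros [HT [_ [_ [H0 _]]]]. unfold Wf. rewrite !P_eq by lra. rewrite !H0. simpl.
  pose proof (sc1 g). lra.
Qed.

Lemma last_visit g T A psi T1 : 0 < g < PI / 2 -> admissible g T A psi ->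
  0 < T1 <= T -> P psi T 2 T1 = 0 ->
  exists t0, 0 <= t0 < T1 /\ Wf g psi T t0 = 1 /\ forall t, t0 < t <= T1 -> Wf g psi T t <> 1.
Proof.
  intros Hg H HT1 H3.
  pose proof (sc_pos g Hg) as [Hs Hc].
  destruct (last_eq (Wf g psi T) 0 T1 1) as [t0 [Ht0 [Hw Hn]]]; try lra.
  - intros; apply (W_cont g T A psi); auto.
  - apply (W0 g T A psi H).
  - exists t0. split; [|split; auto].
    split; [lra|]. destruct (Req_dec t0 T1) as [E|]; [|lra]. exfalso.
    subst t0. pose proof (norm1' g T A psi T1 H) as N. rewrite Hw in N.
    assert (X1 psi T T1 = 0 /\ Qf g psi T T1 = 0) as [E1 E2] by (split; nra).
    rewrite (P2_WQ g), Hw, E2 in H3. lra.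
Qed.

Lemma W_range g T A psi T1 t0 t : 0 < g < PI / 2 -> admissible g T A psi ->
  (forall t, 0 <= t < T1 -> P psi T 2 t > 0) -> P psi T 2 T1 = 0 ->
  (forall t, t0 < t <= T1 -> Wf g psi T t <> 1) -> 0 <= t0 -> t0 < t <= T1 ->
  -1 < Wf g psi T t < 1.
Proof.
  intros Hg H Hpos H3 Hn Ht0 Ht.
  pose proof (sc_pos g Hg) as [Hs Hc].
  pose proof (bnds g T A psi t H) as [_ [Hb _]].
  pose proof (Hn t Ht). split; [|lra].
  destruct (Req_dec (Wf g psi T t) (-1)) as [E|]; [|lra]. exfalso.
  pose proof (norm1' g T A psi t H) as N. rewrite E in N.
  assert (Qf g psi T t = 0) as E2 by nra.
  assert (P psi T 2 t >= 0). { destruct (Req_dec t T1) as [->|]; [lra|]. apply Rgt_ge, Hpos; lra. }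
  rewrite (P2_WQ g), E, E2 in H1. lra.
Qed.

Lemma dacos x : -1 < x < 1 -> derivable_pt_lim acos x (-1 / sqrt (1 - x²)).
Proof.
  intros Hx. apply (derive_pt_eq_1 _ _ _ (derivable_pt_acos x Hx)). apply derive_pt_acos.
Qed.

Lemma cacos x : -1 < x < 1 -> continuity_pt acos x.
Proof. intros Hx. apply derivable_continuous_pt, derivable_pt_acos; auto. Qed.

Definition dd g psi T t := acos (Wf g psi T t).
Definition rho g psi T t := sqrt (1 - (Wf g psi T t)²).

Lemma rho_pos g psi T t : -1 < Wf g psi T t < 1 -> 0 < rho g psi T t.
Proof. intros H. unfold rho. apply sqrt_lt_R0. unfold Rsqr. nra. Qed.

Lemma rho_sq g T A psi t : admissible g T A psi -> -1 < Wf g psi T t < 1 ->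
  rho g psi T t ^ 2 = X1 psi T t ^ 2 + Qf g psi T t ^ 2.
Proof.
  intros H Hw. pose proof (norm1' g T A psi t H). unfold rho.
  rewrite pow2_sqrt. unfold Rsqr; lra. unfold Rsqr; nra.
Qed.

Lemma dd_deriv g T A psi t : admissible g T A psi -> good A T t -> -1 < Wf g psi T t < 1 ->
  derivable_pt_lim (dd g psi T) t (sin g * X1 psi T t / rho g psi T t).
Proof.
  intros H Hgd Hw. destruct H as [HT [Hac [Hso _]]].
  apply (dext _ _ ((-1 / sqrt (1 - (Wf g psi T t)²)) * (- sin g * X1 psi T t))).
  - unfold dd. apply (dcomp (Wf g psi T) acos). apply (W_deriv g T A psi t Hso Hgd). apply dacos; auto.
  - unfold rho. field. apply Rgt_not_eq, sqrt_lt_R0. unfold Rsqr; nra.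
Qed.

Lemma dd_cont g T A psi t : admissible g T A psi -> -1 < Wf g psi T t < 1 -> continuity_pt (dd g psi T) t.
Proof. intros H Hw. unfold dd. apply (cccomp (Wf g psi T) acos). apply (W_cont g T A psi); auto. apply cacos; auto. Qed.

Lemma le_sqrt_of_sq x y : x ^ 2 <= y -> x <= sqrt y.
Proof.
  intros H. destruct (Rle_dec x 0). { pose proof (sqrt_pos y); lra. }
  rewrite <- (sqrt_pow2 x) by lra. apply sqrt_le_1_alt. auto.
Qed.

Lemma X1_le_rho g T A psi t : admissible g T A psi -> -1 < Wf g psi T t < 1 ->
  X1 psi T t <= rho g psi T t /\ - Qf g psi T t <= rho g psi T t /\ Qf g psi T t <= rho g psi T t.
Proof.
  intros H Hw. pose proof (norm1' g T A psi t H) as N. unfold rho.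
  repeat split; apply le_sqrt_of_sq; unfold Rsqr; nra.
Qed.

Lemma dd_lip g T A psi a b : 0 < g < PI / 2 -> admissible g T A psi -> 0 <= a -> a <= b -> b <= T ->
  (forall t, a <= t <= b -> -1 < Wf g psi T t < 1) ->
  dd g psi T b - dd g psi T a <= sin g * (b - a).
Proof.
  intros Hg H Ha Hab Hb Hw. pose proof (sc_pos g Hg) as [Hs Hc].
  pose proof (mono_good A T (fun t => dd g psi T t - sin g * t)
     (fun t => sin g * X1 psi T t / rho g psi T t - sin g * 1) a b) as M.
  simpl in M.
  assert (dd g psi T b - sin g * b <= dd g psi T a - sin g * a); [|lra].
  apply M; auto.
  - destruct H as [_ [Hac _]]; auto.
  - intros c Hc'. apply ccminus. apply (dd_cont g T A psi); auto. apply ccscal, ccid.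
  - intros c Hc' Hgd. split.
    + apply dminus. apply (dd_deriv g T A psi); auto; apply Hw; lra. apply dscal, did.
    + pose proof (X1_le_rho g T A psi c H (Hw c ltac:(lra))) as [Hx _].
      pose proof (rho_pos g psi T c (Hw c ltac:(lra))).
      assert (X1 psi T c / rho g psi T c <= 1).
      { apply (Rmult_le_reg_r (rho g psi T c)); auto. field_simplify; lra. }
      assert (sin g * (X1 psi T c / rho g psi T c) <= sin g * 1) by (apply Rmult_le_compat_l; lra).
      unfold Rdiv in *. lra.
Qed.


Lemma U_ineq (s c w x1 q r dx1 : R) : 0 < s -> 0 < c -> 0 < w -> 0 < r ->
  r ^ 2 = x1 ^ 2 + q ^ 2 -> (dx1 = s * w \/ dx1 = s * w + c * q) ->
  (s * x1 / r) / s + / (4 * c) * (2 * (1 - x1 / r) *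
      (0 - (dx1 * r - (/ (2 * r) * (0 - (- s * x1 * w + w * (- s * x1)))) * x1) / r²)) <= 1.
Proof.
  intros Hs Hc Hw Hr Hn Hd.
  assert (Hex : exists x y, x1 = x * r /\ q = y * r).
  { exists (x1 / r), (q / r). split; field; lra. }
  destruct Hex as [x [y [Ex1 Eq]]].
  assert (Hxy : x ^ 2 + y ^ 2 = 1).
  { apply (Rmult_eq_reg_r (r ^ 2)); [|nra]. transitivity (x1 ^ 2 + q ^ 2); [rewrite Ex1, Eq; ring| rewrite <- Hn; ring]. }
  assert (Hx : x <= 1). { destruct (Rle_dec x 1); auto. assert (y ^ 2 >= 0) by nra. nra. }
  assert (Hy : - y <= 1). { destruct (Rle_dec (- y) 1); auto. assert (x ^ 2 >= 0) by nra. nra. }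
  assert (Hk : 0 <= s * w * y ^ 2 / (2 * c * r)).
  { apply Rmult_le_pos. apply Rmult_le_pos; [apply Rmult_le_pos; lra|]. apply pow2_ge_0. apply Rlt_le, Rinv_0_lt_compat. nra. }
  destruct Hd as [Hd|Hd].
  - replace ((s * x1 / r) / s + / (4 * c) * (2 * (1 - x1 / r) *
      (0 - (dx1 * r - (/ (2 * r) * (0 - (- s * x1 * w + w * (- s * x1)))) * x1) / r²)))
      with (x - (1 - x) * (s * w * y ^ 2 / (2 * c * r))).
    + assert (0 <= (1 - x) * (s * w * y ^ 2 / (2 * c * r))) by (apply Rmult_le_pos; lra). lra.
    + rewrite Hd, Ex1. replace (y ^ 2) with (1 - x ^ 2) by lra. unfold Rsqr. field. repeat split; lra.
  - replace ((s * x1 / r) / s + / (4 * c) * (2 * (1 - x1 / r) *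
      (0 - (dx1 * r - (/ (2 * r) * (0 - (- s * x1 * w + w * (- s * x1)))) * x1) / r²)))
      with (x - (1 - x) * (s * w * y ^ 2 / (2 * c * r)) - (1 - x) * y / 2).
    + assert (0 <= (1 - x) * (s * w * y ^ 2 / (2 * c * r))) by (apply Rmult_le_pos; lra).
      assert (0 <= (1 - x) * (1 + y)) by (apply Rmult_le_pos; lra). lra.
    + rewrite Hd, Ex1, Eq. replace (y ^ 2) with (1 - x ^ 2) by lra. unfold Rsqr. field. repeat split; lra.
Qed.

Definition xrho g psi T t := X1 psi T t / rho g psi T t.
Definition Uf g psi T t := dd g psi T t / sin g + / (4 * cos g) * (1 - xrho g psi T t) ^ 2.

Lemma rho_deriv g T A psi t : admissible g T A psi -> good A T t -> -1 < Wf g psi T t < 1 ->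
  derivable_pt_lim (rho g psi T) t
    (/ (2 * rho g psi T t) * (0 - (- sin g * X1 psi T t * Wf g psi T t + Wf g psi T t * (- sin g * X1 psi T t)))).
Proof.
  intros H Hgd Hw. destruct H as [HT [Hac [Hso _]]].
  unfold rho. apply (dcomp (fun y => 1 - (Wf g psi T y)²) sqrt).
  - apply dminus. apply dconst. unfold Rsqr. apply dmult; apply (W_deriv g T A psi t Hso Hgd).
  - apply derivable_pt_lim_sqrt. unfold Rsqr; nra.
Qed.

Lemma xr_deriv g T A psi t : admissible g T A psi -> good A T t -> -1 < Wf g psi T t < 1 ->
  derivable_pt_lim (xrho g psi T) t
    (((if A t then sin g * Wf g psi T t else sin g * Wf g psi T t + cos g * Qf g psi T t) * rho g psi T t
      - (/ (2 * rho g psi T t) * (0 - (- sin g * X1 psi T t * Wf g psi T t + Wf g psi T t * (- sin g * X1 psi T t))))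
        * X1 psi T t) / (rho g psi T t)²).
Proof.
  intros H Hgd Hw. pose proof (rho_pos g psi T t Hw).
  unfold xrho. apply (ddiv (X1 psi T) (rho g psi T)).
  - destruct H as [_ [_ [Hso _]]]. apply (X1_deriv g T A psi t Hso Hgd).
  - apply (rho_deriv g T A psi t); auto.
  - lra.
Qed.

Lemma U_deriv g T A psi t : admissible g T A psi -> good A T t -> -1 < Wf g psi T t < 1 ->
  derivable_pt_lim (Uf g psi T) t
    ((sin g * X1 psi T t / rho g psi T t) / sin g + / (4 * cos g) * (2 * (1 - X1 psi T t / rho g psi T t) *
      (0 - ((if A t then sin g * Wf g psi T t else sin g * Wf g psi T t + cos g * Qf g psi T t) * rho g psi T t
      - (/ (2 * rho g psi T t) * (0 - (- sin g * X1 psi T t * Wf g psi T t + Wf g psi T t * (- sin g * X1 psi T t))))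
        * X1 psi T t) / (rho g psi T t)²))).
Proof.
  intros H Hgd Hw. unfold Uf.
  apply dplus.
  - apply derivable_pt_lim_div_scal. apply (dd_deriv g T A psi t); auto.
  - apply dscal. apply (dext _ _ (2 * (1 - xrho g psi T t) * (0 - ((if A t then sin g * Wf g psi T t else sin g * Wf g psi T t + cos g * Qf g psi T t) * rho g psi T t
      - (/ (2 * rho g psi T t) * (0 - (- sin g * X1 psi T t * Wf g psi T t + Wf g psi T t * (- sin g * X1 psi T t))))
        * X1 psi T t) / (rho g psi T t)²))).
    + apply (dpow2 (fun y => 1 - xrho g psi T y)). apply dminus. apply dconst. apply (xr_deriv g T A psi t); auto.
    + reflexivity.
Qed.

Definition Ud g psi T (A : R -> bool) t :=
    (sin g * X1 psi T t / rho g psi T t) / sin g + / (4 * cos g) * (2 * (1 - X1 psi T t / rho g psi T t) *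
      (0 - ((if A t then sin g * Wf g psi T t else sin g * Wf g psi T t + cos g * Qf g psi T t) * rho g psi T t
      - (/ (2 * rho g psi T t) * (0 - (- sin g * X1 psi T t * Wf g psi T t + Wf g psi T t * (- sin g * X1 psi T t))))
        * X1 psi T t) / (rho g psi T t)²)).

Lemma U_le g T A psi t : 0 < g < PI / 2 -> admissible g T A psi -> good A T t -> 0 < Wf g psi T t < 1 ->
  derivable_pt_lim (Uf g psi T) t (Ud g psi T A t) /\ Ud g psi T A t <= 1.
Proof.
  intros Hg H Hgd Hw. pose proof (sc_pos g Hg) as [Hs Hc].
  assert (Hw' : -1 < Wf g psi T t < 1) by lra.
  unfold Ud. split. apply U_deriv; auto.
  apply U_ineq with (q := Qf g psi T t); auto; try lra.
  - apply rho_pos; auto.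
  - apply (rho_sq g T A psi t H Hw').
  - destruct (A t); auto.
Qed.

Lemma mono_cmp A T (F D G E : R -> R) a b : admissible_control A T -> 0 <= a -> a <= b -> b <= T ->
  (forall c, a <= c <= b -> continuity_pt F c) ->
  (forall c, a <= c <= b -> continuity_pt G c) ->
  (forall c, a < c < b -> good A T c -> derivable_pt_lim F c (D c)) ->
  (forall c, a < c < b -> derivable_pt_lim G c (E c)) ->
  (forall c, a < c < b -> good A T c -> D c <= E c) ->
  F b - F a <= G b - G a.
Proof.
  intros Hac Ha Hab Hb HcF HcG HdF HdG Hle.
  pose proof (mono_good A T (fun t => F t - G t) (fun t => D t - E t) a b) as M. simpl in M.
  cut (F b - G b <= F a - G a); [lra|]. apply M; auto.
  - intros c Hc. apply ccminus; auto.
  - intros c Hc Hg. split. apply dminus; auto. pose proof (Hle c Hc Hg); lra.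
Qed.

Lemma rho_cont g T A psi t : admissible g T A psi -> -1 < Wf g psi T t < 1 -> continuity_pt (rho g psi T) t.
Proof.
  intros H Hw. unfold rho. apply (cccomp (fun y => 1 - (Wf g psi T y)²) sqrt).
  - apply ccminus. apply ccconst. unfold Rsqr. apply ccmult; apply (W_cont g T A psi); auto.
  - apply continuity_pt_sqrt. unfold Rsqr; nra.
Qed.

Lemma U_cont g T A psi t : 0 < g < PI / 2 -> admissible g T A psi -> -1 < Wf g psi T t < 1 ->
  continuity_pt (Uf g psi T) t.
Proof.
  intros Hg H Hw. pose proof (sc_pos g Hg) as [Hs Hc]. pose proof (rho_pos g psi T t Hw).
  unfold Uf. apply ccplus.
  - apply (continuity_pt_ext (fun y => / sin g * dd g psi T y)). { intros; unfold Rdiv; ring. }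
    apply ccscal. apply (dd_cont g T A psi); auto.
  - apply ccscal. apply ccpow2. apply ccminus. apply ccconst. unfold xrho. apply ccdiv.
    apply (X1_cont g T A psi); auto. apply (rho_cont g T A psi); auto. lra.
Qed.

Lemma U_lip g T A psi a b : 0 < g < PI / 2 -> admissible g T A psi -> 0 <= a -> a <= b -> b <= T ->
  (forall t, a <= t <= b -> 0 < Wf g psi T t < 1) ->
  Uf g psi T b - Uf g psi T a <= b - a.
Proof.
  intros Hg H Ha Hab Hb Hw.
  apply (mono_cmp A T (Uf g psi T) (Ud g psi T A) (fun t => t) (fun _ => 1) a b); auto.
  - destruct H as [_ [Hac _]]; auto.
  - intros c Hc. apply (U_cont g T A psi); auto. pose proof (Hw c Hc); lra.
  - intros c Hc. apply ccid.
  - intros c Hc Hgd. apply (proj1 (U_le g T A psi c Hg H Hgd (Hw c ltac:(lra)))).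
  - intros c Hc. apply did.
  - intros c Hc Hgd. apply (proj2 (U_le g T A psi c Hg H Hgd (Hw c ltac:(lra)))).
Qed.


Definition dX1 g psi T (A : R -> bool) t :=
  if A t then sin g * Wf g psi T t else sin g * Wf g psi T t + cos g * Qf g psi T t.
Definition dQ g psi T (A : R -> bool) t := if A t then 0 else - cos g * X1 psi T t.

Lemma s_le1 g : sin g <= 1 /\ cos g <= 1.
Proof. pose proof (sc1 g). split; nra. Qed.

Lemma at_t0 g T A psi t0 : admissible g T A psi -> Wf g psi T t0 = 1 ->
  X1 psi T t0 = 0 /\ Qf g psi T t0 = 0.
Proof. intros H Hw. pose proof (norm1' g T A psi t0 H). rewrite Hw in H0. split; nra. Qed.

Lemma dG2 k t0 t : derivable_pt_lim (fun y => k * (y - t0) ^ 2) t (k * (2 * (t - t0) * 1)).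
Proof. apply dscal. apply (dext _ _ (2 * (t - t0) * (1 - 0))). apply (dpow2 (fun y => y - t0)). apply dminus. apply did. apply dconst. ring. Qed.
Lemma cG2 k t0 t : continuity_pt (fun y => k * (y - t0) ^ 2) t.
Proof. apply ccscal. apply ccpow2. apply ccminus. apply ccid. apply ccconst. Qed.

Lemma LA1 g T A psi t0 t : 0 < g < PI / 2 -> admissible g T A psi -> Wf g psi T t0 = 1 ->
  0 <= t0 -> t0 <= t <= T -> X1 psi T t <= 2 * (t - t0) /\ - X1 psi T t <= 2 * (t - t0).
Proof.
  intros Hg H Hw Ht0 Ht. pose proof (sc_pos g Hg) as [Hs Hc]. pose proof (s_le1 g) as [Hs1 Hc1].
  destruct (at_t0 g T A psi t0 H Hw) as [E1 _].
  pose proof H as [_ [Hac [Hso _]]].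
  split.
  - pose proof (mono_cmp A T (X1 psi T) (dX1 g psi T A) (fun y => 2 * y) (fun _ => 2 * 1) t0 t Hac) as M.
    cut (X1 psi T t - X1 psi T t0 <= 2 * t - 2 * t0); [lra|]. apply M; try lra.
    + intros; apply (X1_cont g T A psi); auto.
    + intros; apply ccscal, ccid.
    + intros c Hc' Hgd. apply (X1_deriv g T A psi c Hso Hgd).
    + intros; apply dscal, did.
    + intros c _ _. pose proof (bnds g T A psi c H) as [_ [Hb1 Hb2]]. unfold dX1. destruct (A c); nra.
  - pose proof (mono_cmp A T (fun y => - X1 psi T y) (fun y => - dX1 g psi T A y) (fun y => 2 * y) (fun _ => 2 * 1) t0 t Hac) as M.
    cut (- X1 psi T t - - X1 psi T t0 <= 2 * t - 2 * t0); [lra|]. apply M; try lra.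
    + intros; apply ccopp; apply (X1_cont g T A psi); auto.
    + intros; apply ccscal, ccid.
    + intros c Hc' Hgd. apply dopp. apply (X1_deriv g T A psi c Hso Hgd).
    + intros; apply dscal, did.
    + intros c _ _. pose proof (bnds g T A psi c H) as [_ [Hb1 Hb2]]. unfold dX1. destruct (A c); nra.
Qed.

Lemma LA2 g T A psi t0 t : 0 < g < PI / 2 -> admissible g T A psi -> Wf g psi T t0 = 1 ->
  0 <= t0 -> t0 <= t <= T -> Qf g psi T t <= cos g * (t - t0) ^ 2 /\ - Qf g psi T t <= cos g * (t - t0) ^ 2.
Proof.
  intros Hg H Hw Ht0 Ht. pose proof (sc_pos g Hg) as [Hs Hc]. pose proof (s_le1 g) as [Hs1 Hc1].
  destruct (at_t0 g T A psi t0 H Hw) as [_ E2].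
  pose proof H as [_ [Hac [Hso _]]].
  assert (Hd : forall c, t0 < c < t -> Rabs (dQ g psi T A c) <= cos g * (2 * (c - t0) * 1)).
  { intros c Hc'. pose proof (LA1 g T A psi t0 c Hg H Hw Ht0 ltac:(lra)) as [L1 L2].
    unfold dQ. destruct (A c). rewrite Rabs_R0. nra.
    unfold Rabs; destruct Rcase_abs; nra. }
  split.
  - pose proof (mono_cmp A T (Qf g psi T) (dQ g psi T A) (fun y => cos g * (y - t0) ^ 2)
       (fun y => cos g * (2 * (y - t0) * 1)) t0 t Hac) as M.
    cut (Qf g psi T t - Qf g psi T t0 <= cos g * (t - t0) ^ 2 - cos g * (t0 - t0) ^ 2); [simpl; lra|].
    apply M; try lra.
    + intros; apply (Q_cont g T A psi); auto.
    + intros; apply cG2.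
    + intros c Hc' Hgd. apply (Q_deriv g T A psi c Hso Hgd).
    + intros; apply dG2.
    + intros c Hc' _. pose proof (Hd c Hc'). pose proof (Rle_abs (dQ g psi T A c)). lra.
  - pose proof (mono_cmp A T (fun y => - Qf g psi T y) (fun y => - dQ g psi T A y) (fun y => cos g * (y - t0) ^ 2)
       (fun y => cos g * (2 * (y - t0) * 1)) t0 t Hac) as M.
    cut (- Qf g psi T t - - Qf g psi T t0 <= cos g * (t - t0) ^ 2 - cos g * (t0 - t0) ^ 2); [simpl; lra|].
    apply M; try lra.
    + intros; apply ccopp; apply (Q_cont g T A psi); auto.
    + intros; apply cG2.
    + intros c Hc' Hgd. apply dopp. apply (Q_deriv g T A psi c Hso Hgd).
    + intros; apply dG2.
    + intros c Hc' _. pose proof (Hd c Hc'). pose proof (Rle_abs (- dQ g psi T A c)). rewrite Rabs_Ropp in H1. lra.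
Qed.

Lemma LA3 g T A psi t0 t : 0 < g < PI / 2 -> admissible g T A psi -> Wf g psi T t0 = 1 ->
  0 <= t0 -> t0 <= t <= T -> 1 - sin g * (t - t0) ^ 2 <= Wf g psi T t.
Proof.
  intros Hg H Hw Ht0 Ht. pose proof (sc_pos g Hg) as [Hs Hc].
  pose proof H as [_ [Hac [Hso _]]].
  pose proof (mono_cmp A T (fun y => - Wf g psi T y) (fun y => - (- sin g * X1 psi T y)) (fun y => sin g * (y - t0) ^ 2)
       (fun y => sin g * (2 * (y - t0) * 1)) t0 t Hac) as M.
  cut (- Wf g psi T t - - Wf g psi T t0 <= sin g * (t - t0) ^ 2 - sin g * (t0 - t0) ^ 2); [simpl; lra|].
  apply M; try lra.
  + intros; apply ccopp; apply (W_cont g T A psi); auto.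
  + intros; apply cG2.
  + intros c Hc' Hgd. apply dopp. apply (W_deriv g T A psi c Hso Hgd).
  + intros; apply dG2.
  + intros c Hc' _. pose proof (LA1 g T A psi t0 c Hg H Hw Ht0 ltac:(lra)) as [L1 L2]. nra.
Qed.

Lemma LA4 g T A psi t0 h t : 0 < g < PI / 2 -> admissible g T A psi -> Wf g psi T t0 = 1 ->
  0 <= t0 -> 0 < h -> h <= 1 -> h <= sin g / 2 -> t0 + h <= T -> t0 <= t <= t0 + h ->
  sin g / 2 * (t - t0) <= X1 psi T t.
Proof.
  intros Hg H Hw Ht0 Hh Hh1 Hh2 HhT Ht. pose proof (sc_pos g Hg) as [Hs Hc].
  pose proof (sc1 g) as Esc.
  destruct (at_t0 g T A psi t0 H Hw) as [E1 _].
  pose proof H as [_ [Hac [Hso _]]].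
  pose proof (mono_cmp A T (fun y => - X1 psi T y) (fun y => - dX1 g psi T A y) (fun y => - (sin g / 2) * y)
       (fun y => - (sin g / 2) * 1) t0 t Hac) as M.
  cut (- X1 psi T t - - X1 psi T t0 <= - (sin g / 2) * t - - (sin g / 2) * t0); [lra|].
  apply M; try lra.
  + intros; apply ccopp; apply (X1_cont g T A psi); auto.
  + intros; apply ccscal, ccid.
  + intros c Hc' Hgd. apply dopp. apply (X1_deriv g T A psi c Hso Hgd).
  + intros; apply dscal, did.
  + intros c Hc' _.
    pose proof (LA2 g T A psi t0 c Hg H Hw Ht0 ltac:(lra)) as [L1 L2].
    pose proof (LA3 g T A psi t0 c Hg H Hw Ht0 ltac:(lra)) as L3.
    assert (Hu : (c - t0) ^ 2 <= h) by nra.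
    assert (K : sin g / 2 <= dX1 g psi T A c).
    { unfold dX1. destruct (A c).
      - nra.
      - nra. }
    lra.
Qed.

Lemma LA5 g T A psi t0 h t : 0 < g < PI / 2 -> admissible g T A psi -> Wf g psi T t0 = 1 ->
  0 <= t0 -> 0 < h -> h <= 1 -> h <= sin g / 2 -> t0 + h <= T -> t0 <= t <= t0 + h ->
  Qf g psi T t <= 0.
Proof.
  intros Hg H Hw Ht0 Hh Hh1 Hh2 HhT Ht. pose proof (sc_pos g Hg) as [Hs Hc].
  destruct (at_t0 g T A psi t0 H Hw) as [_ E2].
  pose proof H as [_ [Hac [Hso _]]].
  cut (Qf g psi T t <= Qf g psi T t0); [lra|].
  apply (mono_good A T (Qf g psi T) (dQ g psi T A) t0 t Hac); try lra.
  - intros; apply (Q_cont g T A psi); auto.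
  - intros c Hc' Hgd. split. apply (Q_deriv g T A psi c Hso Hgd).
    pose proof (LA4 g T A psi t0 h c Hg H Hw Ht0 Hh Hh1 Hh2 HhT ltac:(lra)).
    assert (0 <= sin g / 2 * (c - t0)) by (apply Rmult_le_pos; lra).
    assert (0 <= cos g * X1 psi T c) by (apply Rmult_le_pos; lra).
    unfold dQ. destruct (A c); lra.
Qed.

Lemma acos_small w e : 0 < e <= 1 -> cos e <= w <= 1 -> acos w <= e.
Proof.
  intros He Hw. pose proof (acos_bound w) as Hb. pose proof PI_RGT_0. pose proof PI2_1.
  destruct (Rle_dec (acos w) e) as [|Hn]; auto. exfalso.
  assert (cos (acos w) < cos e) by (apply cos_decreasing_1; lra).
  rewrite cos_acos in H1 by (pose proof (COS_bound e); lra). lra.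
Qed.

Lemma cos_lt1 e : 0 < e <= 1 -> cos e < 1.
Proof.
  intros He. pose proof PI2_1. rewrite <- cos_0. apply cos_decreasing_1; lra.
Qed.

Lemma phi_small (a q r u s c e : R) : 0 < s -> 0 < c -> c <= 1 -> 0 < u -> u ^ 2 <= 1 ->
  u ^ 2 <= c * s ^ 4 * e / 2 -> s / 2 * u <= a -> q ^ 2 <= (c * u ^ 2) ^ 2 -> 0 < r ->
  r ^ 2 = a ^ 2 + q ^ 2 -> a <= r ->
  / (4 * c) * (1 - a / r) ^ 2 <= e / 2.
Proof.
  intros Hs Hc Hc1 Hu Hu1 Hue Ha Hq Hr Hn Har.
  assert (Ha0 : 0 < a) by nra.
  assert (K1 : 0 <= 1 - a / r).
  { assert (a / r <= 1); [|lra]. apply (Rmult_le_reg_r r); auto. field_simplify; lra. }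
  assert (K2 : 1 - a / r <= q ^ 2 / (2 * a ^ 2)).
  { assert (E : 1 - a / r = (r - a) / r) by (field; lra). rewrite E.
    apply (Rmult_le_reg_r (2 * a ^ 2 * r)). apply Rmult_lt_0_compat; [|lra]; apply Rmult_lt_0_compat; [lra|apply pow_lt; lra].
    replace ((r - a) / r * (2 * a ^ 2 * r)) with (2 * a ^ 2 * (r - a)) by (field; lra).
    replace (q ^ 2 / (2 * a ^ 2) * (2 * a ^ 2 * r)) with (q ^ 2 * r) by (field; lra).
    replace (q ^ 2) with (r ^ 2 - a ^ 2) by lra.
    assert (0 <= (r - a) * (r - a) * (r + 2 * a)) by (apply Rmult_le_pos; [apply Rmult_le_pos|]; lra).
    nra. }
  assert (K3 : q ^ 2 / (2 * a ^ 2) <= 2 * c ^ 2 * u ^ 2 / s ^ 2).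
  { apply (Rmult_le_reg_r (2 * a ^ 2 * s ^ 2)). apply Rmult_lt_0_compat; [apply Rmult_lt_0_compat; [lra|apply pow_lt; lra]|apply pow_lt; lra].
    replace (q ^ 2 / (2 * a ^ 2) * (2 * a ^ 2 * s ^ 2)) with (q ^ 2 * s ^ 2) by (field; lra).
    replace (2 * c ^ 2 * u ^ 2 / s ^ 2 * (2 * a ^ 2 * s ^ 2)) with (4 * c ^ 2 * u ^ 2 * a ^ 2) by (field; lra).
    assert (s ^ 2 / 4 * u ^ 2 <= a ^ 2).
    { replace (s ^ 2 / 4 * u ^ 2) with ((s / 2 * u) ^ 2) by field.
      apply pow_incr; split; [apply Rmult_le_pos; lra|lra]. }
    assert (c ^ 2 * u ^ 4 * s ^ 2 <= 4 * c ^ 2 * u ^ 2 * a ^ 2).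
    { assert (0 <= 4 * c ^ 2 * u ^ 2) by nra. nra. }
    nra. }
  assert (K4 : (1 - a / r) ^ 2 <= (2 * c ^ 2 * u ^ 2 / s ^ 2) ^ 2).
  { apply pow_incr. lra. }
  assert (K5 : / (4 * c) * (2 * c ^ 2 * u ^ 2 / s ^ 2) ^ 2 <= e / 2).
  { replace (/ (4 * c) * (2 * c ^ 2 * u ^ 2 / s ^ 2) ^ 2) with (c ^ 3 * (u ^ 2) ^ 2 / s ^ 4) by (field; lra).
    apply (Rmult_le_reg_r (s ^ 4)). apply pow_lt; lra.
    replace (c ^ 3 * (u ^ 2) ^ 2 / s ^ 4 * s ^ 4) with (c ^ 3 * (u ^ 2) ^ 2) by (field; lra).
    assert ((u ^ 2) ^ 2 <= u ^ 2) by nra.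
    assert (c ^ 3 <= c) by nra.
    assert (0 <= u ^ 2) by nra.
    assert (c ^ 3 * (u ^ 2) ^ 2 <= c * u ^ 2) by nra.
    assert (c * u ^ 2 <= c * (c * s ^ 4 * e / 2)) by nra.
    assert (0 <= s ^ 4 * e / 2) by nra.
    assert (c ^ 2 <= 1) by nra.
    assert (c ^ 2 * (s ^ 4 * e / 2) <= 1 * (s ^ 4 * e / 2)) by (apply Rmult_le_compat_r; lra).
    assert (c * (c * s ^ 4 * e / 2) = c ^ 2 * (s ^ 4 * e / 2)) by field.
    lra. }
  assert (0 < / (4 * c)) by (apply Rinv_0_lt_compat; lra).
  nra.
Qed.

Lemma small_start g T A psi t0 h : 0 < g < PI / 2 -> admissible g T A psi -> Wf g psi T t0 = 1 ->
  0 <= t0 -> 0 < h -> h <= 1 -> h <= sin g / 2 -> t0 + h <= T ->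
  (forall t, t0 < t <= t0 + h -> -1 < Wf g psi T t < 1) ->
  forall e, 0 < e -> exists t', t0 < t' <= t0 + h /\ Uf g psi T t' <= e.
Proof.
  intros Hg H Hw Ht0 Hh Hh1 Hh2 HhT Hwr e He.
  pose proof (sc_pos g Hg) as [Hs Hc]. pose proof (s_le1 g) as [Hs1 Hc1].
  set (e1 := Rmin (sin g * e / 2) 1).
  assert (He1 : 0 < e1 <= 1). { unfold e1. split. apply Rmin_glb_lt; [nra|lra]. apply Rmin_r. }
  assert (He1' : e1 <= sin g * e / 2) by apply Rmin_l.
  pose proof (cos_lt1 e1 He1) as Hce.
  set (m := Rmin 1 (Rmin ((1 - cos e1) / sin g) (cos g * sin g ^ 4 * e / 2))).
  assert (Hm1 : m <= 1) by apply Rmin_l.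
  assert (Hm2 : m <= (1 - cos e1) / sin g) by (eapply Rle_trans; [apply Rmin_r|apply Rmin_l]).
  assert (Hm3 : m <= cos g * sin g ^ 4 * e / 2) by (eapply Rle_trans; [apply Rmin_r|apply Rmin_r]).
  assert (Hm0 : 0 < m).
  { unfold m. apply Rmin_glb_lt; [lra|]. apply Rmin_glb_lt.
    apply Rdiv_lt_0_compat; lra. assert (0 < sin g ^ 4) by (apply pow_lt; lra).
    assert (0 < cos g * sin g ^ 4 * e) by (repeat apply Rmult_lt_0_compat; lra). lra. }
  set (u := Rmin h m).
  assert (Hu0 : 0 < u) by (apply Rmin_glb_lt; lra).
  assert (Huh : u <= h) by apply Rmin_l.
  assert (Hum : u <= m) by apply Rmin_r.
  assert (Hu2 : u ^ 2 <= u) by nra.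
  exists (t0 + u). split; [lra|].
  pose proof (Hwr (t0 + u) ltac:(lra)) as Hw'.
  pose proof (LA2 g T A psi t0 (t0 + u) Hg H Hw Ht0 ltac:(lra)) as [L1 L2].
  pose proof (LA3 g T A psi t0 (t0 + u) Hg H Hw Ht0 ltac:(lra)) as L3.
  pose proof (LA4 g T A psi t0 h (t0 + u) Hg H Hw Ht0 Hh Hh1 Hh2 HhT ltac:(lra)) as L4.
  replace (t0 + u - t0) with u in * by ring.
  unfold Uf.
  assert (D1 : dd g psi T (t0 + u) <= e1).
  { unfold dd. apply acos_small; auto. split; [|lra].
    assert (sin g * u ^ 2 <= sin g * ((1 - cos e1) / sin g)) by nra.
    replace (sin g * ((1 - cos e1) / sin g)) with (1 - cos e1) in H0 by (field; lra). lra. }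
  assert (D2 : dd g psi T (t0 + u) / sin g <= e / 2).
  { apply (Rmult_le_reg_r (sin g)); auto. replace (dd g psi T (t0 + u) / sin g * sin g) with (dd g psi T (t0 + u)) by (field; lra). lra. }
  assert (D3 : / (4 * cos g) * (1 - xrho g psi T (t0 + u)) ^ 2 <= e / 2).
  { unfold xrho. apply (phi_small _ (Qf g psi T (t0 + u)) _ u (sin g)); auto; try lra.
    - replace ((cos g * u ^ 2) ^ 2) with ((cos g * u ^ 2) * (cos g * u ^ 2)) by ring.
      replace (Qf g psi T (t0 + u) ^ 2) with (Qf g psi T (t0 + u) * Qf g psi T (t0 + u)) by ring.
      assert (0 <= (cos g * u ^ 2 - Qf g psi T (t0 + u)) * (cos g * u ^ 2 + Qf g psi T (t0 + u))) by (apply Rmult_le_pos; lra).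
      assert (E : (cos g * u ^ 2 - Qf g psi T (t0 + u)) * (cos g * u ^ 2 + Qf g psi T (t0 + u)) =
        cos g * u ^ 2 * (cos g * u ^ 2) - Qf g psi T (t0 + u) * Qf g psi T (t0 + u)) by ring.
      lra.
    - apply rho_pos; auto.
    - apply (rho_sq g T A psi); auto.
    - apply (X1_le_rho g T A psi); auto. }
  unfold Uf in D3 |- *. 
  lra.
Qed.

Lemma acos_ge w th : 0 <= th <= PI -> -1 <= w <= cos th -> th <= acos w.
Proof.
  intros Hth Hw. pose proof (acos_bound w) as Hb.
  destruct (Rle_dec th (acos w)) as [|Hn]; auto. exfalso.
  assert (cos th < cos (acos w)) by (apply cos_decreasing_1; lra).
  rewrite cos_acos in H by (pose proof (COS_bound th); lra). lra.
Qed.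

Lemma tan_gt g : 0 < g < PI / 2 -> g * cos g < sin g.
Proof.
  intros Hg.
  destruct (MVT_cor2 (fun x => sin x - x * cos x) (fun x => x * sin x) 0 g) as [c [E Hc]]; [lra| |].
  - intros c _. apply (dext _ _ (cos c - (1 * cos c + c * (- sin c)))).
    apply dminus. apply derivable_pt_lim_sin. apply dmult. apply did. apply derivable_pt_lim_cos. ring.
  - rewrite sin_0, cos_0 in E. assert (0 < sin c) by (apply sin_gt_0; pose proof PI2_1; lra).
    assert (0 < c * sin c * (g - 0)) by (repeat apply Rmult_lt_0_compat; lra). lra.
Qed.


Lemma strict_nil (F D : R -> R) (a b : R) :
  a < b ->
  (forall c, a <= c <= b -> continuity_pt F c) ->
  (forall c, a < c < b -> derivable_pt_lim F c (D c) /\ D c < 0) ->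
  F b < F a.
Proof.
  intros Hlt Hc Hd.
  assert (pr1 : forall c, a < c < b -> derivable_pt F c).
  { intros c Hc'. exists (D c). apply (proj1 (Hd c Hc')). }
  assert (pr2 : forall c, a < c < b -> derivable_pt id c).
  { intros c _. apply derivable_pt_id. }
  destruct (MVT F id a b pr1 pr2 Hlt Hc) as [c [P HP]].
  { intros c _. apply derivable_continuous_pt, derivable_pt_id. }
  assert (E1 : derive_pt F c (pr1 c P) = D c).
  { apply derive_pt_eq_0. apply (proj1 (Hd c P)). }
  assert (E2 : derive_pt id c (pr2 c P) = 1).
  { apply derive_pt_eq_0. apply derivable_pt_lim_id. }
  rewrite E1, E2 in HP. unfold id in HP.
  destruct (Hd c P) as [_ Hle].
  nra.
Qed.

Lemma good_of_const (A : R -> bool) T e c : (forall t, 0 < t < e -> A t = false) ->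
  0 < c < e -> c < T -> good A T c.
Proof.
  intros HA Hc HcT. split; [lra|]. intros [_ Hn]. apply Hn.
  exists (Rmin c (e - c)). split. apply Rmin_glb_lt; lra.
  intros s Hs Hsc. rewrite (HA c) by lra. apply HA.
  assert (Rmin c (e - c) <= c) by apply Rmin_l. assert (Rmin c (e - c) <= e - c) by apply Rmin_r.
  unfold Rabs in Hsc; destruct Rcase_abs in Hsc; lra.
Qed.

Lemma caseII g T A psi T1 t0 : 0 < g < PI / 2 -> admissible g T A psi ->
  0 < T1 <= T -> P psi T 2 T1 = 0 -> (forall t, 0 <= t < T1 -> P psi T 2 t > 0) ->
  0 <= t0 < T1 -> Wf g psi T t0 = 1 -> (forall t, t0 < t <= T1 -> Wf g psi T t <> 1) ->
  (forall t, t0 < t <= T1 -> 0 < Wf g psi T t) ->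
  (PI / 2 - g) / sin g + / cos g <= T1 - t0.
Proof.
  intros Hg H HT1 HP2 Hpos Ht0 Hw Hn Hwp.
  pose proof (sc_pos g Hg) as [Hs Hc]. pose proof (s_le1 g) as [Hs1 Hc1].
  pose proof H as [HT [Hac [Hso _]]].
  assert (Hwr : forall t, t0 < t <= T1 -> -1 < Wf g psi T t < 1).
  { intros t Ht. apply (W_range g T A psi T1 t0 t); auto; lra. }
  set (h := Rmin (T1 - t0) (Rmin 1 (sin g / 2))).
  assert (Hh0 : 0 < h). { unfold h. apply Rmin_glb_lt; [lra|]. apply Rmin_glb_lt; lra. }
  assert (Hh1 : h <= T1 - t0) by apply Rmin_l.
  assert (Hh2 : h <= 1) by (eapply Rle_trans; [apply Rmin_r|apply Rmin_l]).
  assert (Hh3 : h <= sin g / 2) by (eapply Rle_trans; [apply Rmin_r|apply Rmin_r]).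
  remember (t0 + h) as a0 eqn:Ea0.
  assert (Qa0 : Qf g psi T a0 <= 0).
  { apply (LA5 g T A psi t0 h a0); auto; lra. }
  assert (QT1 : 0 < Qf g psi T T1).
  { rewrite (P2_WQ g) in HP2. pose proof (Hwp T1 ltac:(lra)).
    assert (0 < cos g * Wf g psi T T1) by (apply Rmult_lt_0_compat; lra).
    assert (sin g * Qf g psi T T1 > 0) by lra.
    destruct (Rle_dec (Qf g psi T T1) 0); [|lra]. nra. }
  assert (Ha0 : a0 < T1). { destruct (Req_dec a0 T1) as [E|]. rewrite E in Qa0; lra. lra. }
  destruct (last_nonpos (Qf g psi T) a0 T1 Ha0) as [tau [Htau [Qtau [Qle Hpt]]]]; auto.
  { intros; apply (Q_cont g T A psi); auto. }
  assert (Hwt : -1 < Wf g psi T tau < 1) by (apply Hwr; lra).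
  assert (Hrho : 0 < rho g psi T tau) by (apply rho_pos; auto).
  pose proof (rho_sq g T A psi tau H Hwt) as Hrs. rewrite Qtau in Hrs.
  assert (Xneg : X1 psi T tau < 0).
  { destruct (Rlt_dec (X1 psi T tau) 0) as [|Hx]; auto. exfalso.
    assert (Xpos : 0 < X1 psi T tau).
    { destruct (Req_dec (X1 psi T tau) 0) as [E|]; [|lra]. rewrite E in Hrs. nra. }
    destruct (cont_eps (X1 psi T) tau (X1_cont g T A psi tau H) (X1 psi T tau) Xpos) as [d [Hd Hd']].
    destruct (Hpt d Hd) as [t [Ht [HtT1 Hqt]]].
    assert (Qf g psi T t <= Qf g psi T tau).
    { apply (mono_good A T (Qf g psi T) (dQ g psi T A) tau t Hac); try lra.
      - intros; apply (Q_cont g T A psi); auto.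
      - intros c Hc' Hgd. split. apply (Q_deriv g T A psi c Hso Hgd).
        assert (Rabs (X1 psi T c - X1 psi T tau) < X1 psi T tau) by (apply Hd'; rewrite Rabs_right; lra).
        apply Rabs_def2 in H0.
        assert (0 <= cos g * X1 psi T c) by (apply Rmult_le_pos; lra).
        unfold dQ. destruct (A c); lra. }
    lra. }
  assert (Erho : rho g psi T tau = - X1 psi T tau).
  { assert ((rho g psi T tau - - X1 psi T tau) * (rho g psi T tau + - X1 psi T tau) = 0) by nra.
    apply Rmult_integral in H0. destruct H0; lra. }
  assert (Utau : Uf g psi T tau = dd g psi T tau / sin g + / cos g).
  { unfold Uf, xrho. rewrite Erho. replace (X1 psi T tau / - X1 psi T tau) with (-1) by (field; lra).
    field. lra. }
  assert (HdT1 : PI / 2 - g <= dd g psi T T1).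
  { unfold dd. apply acos_ge. pose proof PI_RGT_0; lra.
    rewrite cos_shift. split. pose proof (bnds g T A psi T1 H); lra.
    pose proof (Hwp T1 ltac:(lra)) as Hw1.
    rewrite (P2_WQ g) in HP2. pose proof (norm1' g T A psi T1 H) as N.
    pose proof (sc1 g) as E.
    assert (Eq : sin g * Qf g psi T T1 = cos g * Wf g psi T T1) by lra.
    assert (cos g ^ 2 * Wf g psi T T1 ^ 2 <= sin g ^ 2 * (1 - Wf g psi T T1 ^ 2)).
    { replace (cos g ^ 2 * Wf g psi T T1 ^ 2) with ((sin g * Qf g psi T T1) ^ 2) by (rewrite Eq; ring).
      assert (0 <= X1 psi T T1 ^ 2) by apply pow2_ge_0.
      replace ((sin g * Qf g psi T T1) ^ 2) with (sin g ^ 2 * Qf g psi T T1 ^ 2) by ring.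
      apply Rmult_le_compat_l. apply pow2_ge_0. lra. }
    assert (Wf g psi T T1 ^ 2 <= sin g ^ 2) by nra.
    destruct (Rle_dec (Wf g psi T T1) (sin g)); auto. nra. }
  assert (Hdd : dd g psi T T1 - dd g psi T tau <= sin g * (T1 - tau)).
  { apply (dd_lip g T A psi); auto; try lra. intros t Ht. apply Hwr; lra. }
  apply le_eps. intros e He.
  destruct (small_start g T A psi t0 h Hg H Hw ltac:(lra) Hh0 Hh2 Hh3 ltac:(lra)
     ltac:(intros t Ht; apply Hwr; lra) e He) as [t' [Ht' HUt']].
  assert (HU : Uf g psi T tau - Uf g psi T t' <= tau - t').
  { apply (U_lip g T A psi); auto; try lra.
    intros t Ht. split. apply Hwp; lra. apply Hwr; lra. }
  assert (Hg2 : g / sin g < / cos g).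
  { pose proof (tan_gt g Hg). apply (Rmult_lt_reg_r (sin g * cos g)). nra.
    replace (g / sin g * (sin g * cos g)) with (g * cos g) by (field; lra).
    replace (/ cos g * (sin g * cos g)) with (sin g) by (field; lra). lra. }
  assert (E1 : dd g psi T T1 / sin g <= dd g psi T tau / sin g + (T1 - tau)).
  { apply (Rmult_le_reg_r (sin g)); auto.
    replace (dd g psi T T1 / sin g * sin g) with (dd g psi T T1) by (field; lra).
    replace ((dd g psi T tau / sin g + (T1 - tau)) * sin g) with (dd g psi T tau + sin g * (T1 - tau)) by (field; lra).
    lra. }
  assert (E2 : (PI / 2 - g) / sin g <= dd g psi T T1 / sin g).
  { unfold Rdiv. apply Rmult_le_compat_r; auto. apply Rlt_le, Rinv_0_lt_compat; auto. }
  lra.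
Qed.

Lemma dd_le_U g psi T t : 0 < g < PI / 2 -> dd g psi T t <= sin g * Uf g psi T t.
Proof.
  intros Hg. pose proof (sc_pos g Hg) as [Hs Hc]. unfold Uf.
  assert (0 <= / (4 * cos g) * (1 - xrho g psi T t) ^ 2).
  { apply Rmult_le_pos. apply Rlt_le, Rinv_0_lt_compat; lra. apply pow2_ge_0. }
  replace (sin g * (dd g psi T t / sin g + / (4 * cos g) * (1 - xrho g psi T t) ^ 2))
    with (dd g psi T t + sin g * (/ (4 * cos g) * (1 - xrho g psi T t) ^ 2)) by (field; lra).
  assert (0 <= sin g * (/ (4 * cos g) * (1 - xrho g psi T t) ^ 2)) by (apply Rmult_le_pos; lra).
  lra.
Qed.

Lemma ddPI2 g psi T t : -1 <= Wf g psi T t <= 0 -> PI / 2 <= dd g psi T t.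
Proof.
  intros Hw. unfold dd. apply acos_ge. pose proof PI_RGT_0; lra. rewrite cos_PI2. auto.
Qed.

Lemma caseI g T A psi T1 t0 tw : 0 < g < PI / 2 -> admissible g T A psi ->
  0 < T1 <= T -> P psi T 2 T1 = 0 -> (forall t, 0 <= t < T1 -> P psi T 2 t > 0) ->
  0 <= t0 < T1 -> Wf g psi T t0 = 1 -> (forall t, t0 < t <= T1 -> Wf g psi T t <> 1) ->
  t0 < tw <= T1 -> Wf g psi T tw <= 0 ->
  PI / 2 <= sin g * (tw - t0).
Proof.
  intros Hg H HT1 HP2 Hpos Ht0 Hw Hn Htw Hww.
  pose proof (sc_pos g Hg) as [Hs Hc].
  assert (Hwr : forall t, t0 < t <= T1 -> -1 < Wf g psi T t < 1).
  { intros t Ht. apply (W_range g T A psi T1 t0 t); auto; lra. }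
  set (h := Rmin (tw - t0) (Rmin 1 (sin g / 2))).
  assert (Hh0 : 0 < h). { unfold h. apply Rmin_glb_lt; [lra|]. apply Rmin_glb_lt; lra. }
  assert (Hh1 : h <= tw - t0) by apply Rmin_l.
  assert (Hh2 : h <= 1) by (eapply Rle_trans; [apply Rmin_r|apply Rmin_l]).
  assert (Hh3 : h <= sin g / 2) by (eapply Rle_trans; [apply Rmin_r|apply Rmin_r]).
  clearbody h.
  assert (Hdw : PI / 2 <= dd g psi T tw).
  { apply ddPI2. pose proof (Hwr tw Htw). lra. }
  apply le_eps. intros e He.
  destruct (small_start g T A psi t0 h Hg H Hw ltac:(lra) Hh0 Hh2 Hh3 ltac:(lra)
     ltac:(intros t Ht; apply Hwr; lra) (e / sin g) ltac:(apply Rdiv_lt_0_compat; lra)) as [t' [Ht' HUt']].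
  assert (Hl : dd g psi T tw - dd g psi T t' <= sin g * (tw - t')).
  { apply (dd_lip g T A psi); auto; try lra. intros t Ht. apply Hwr; lra. }
  pose proof (dd_le_U g psi T t' Hg).
  assert (sin g * Uf g psi T t' <= sin g * (e / sin g)) by (apply Rmult_le_compat_l; lra).
  replace (sin g * (e / sin g)) with e in H1 by (field; lra).
  assert (sin g * (tw - t') <= sin g * (tw - t0)) by (apply Rmult_le_compat_l; lra).
  lra.
Qed.

Lemma caseI_strict g T A psi T1 tw ep : 0 < g < PI / 2 -> admissible g T A psi ->
  0 < T1 <= T -> P psi T 2 T1 = 0 -> (forall t, 0 <= t < T1 -> P psi T 2 t > 0) ->
  Wf g psi T 0 = 1 -> (forall t, 0 < t <= T1 -> Wf g psi T t <> 1) ->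
  0 < tw <= T1 -> Wf g psi T tw <= 0 -> 0 < ep -> (forall t, 0 < t < ep -> A t = false) ->
  PI / 2 < sin g * tw.
Proof.
  intros Hg H HT1 HP2 Hpos Hw Hn Htw Hww Hep HA.
  pose proof (sc_pos g Hg) as [Hs Hc].
  pose proof H as [HT [Hac [Hso _]]].
  assert (Hwr : forall t, 0 < t <= T1 -> -1 < Wf g psi T t < 1).
  { intros t Ht. apply (W_range g T A psi T1 0 t); auto; lra. }
  set (h := Rmin (tw - 0) (Rmin 1 (sin g / 2))).
  assert (Hh0 : 0 < h). { unfold h. apply Rmin_glb_lt; [lra|]. apply Rmin_glb_lt; lra. }
  assert (Hh1 : h <= tw - 0) by apply Rmin_l.
  assert (Hh2 : h <= 1) by (eapply Rle_trans; [apply Rmin_r|apply Rmin_l]).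
  assert (Hh3 : h <= sin g / 2) by (eapply Rle_trans; [apply Rmin_r|apply Rmin_r]).
  clearbody h.
  set (m := Rmin h ep).
  assert (Hm0 : 0 < m) by (apply Rmin_glb_lt; lra).
  assert (Hmh : m <= h) by apply Rmin_l.
  assert (Hme : m <= ep) by apply Rmin_r.
  clearbody m.
  set (a := m / 3). set (b := 2 * m / 3).
  assert (Ha : 0 < a < b) by (unfold a, b; lra). assert (Hb : b < m) by (unfold b; lra).
  clearbody a b.
  destruct (at_t0 g T A psi 0 H Hw) as [_ Q0].
  assert (Hgood : forall c, 0 < c < m -> good A T c).
  { intros c Hc'. apply (good_of_const A T ep c HA); lra. }
  assert (Hx1 : forall c, 0 < c <= h -> 0 < X1 psi T c).
  { intros c Hc'. pose proof (LA4 g T A psi 0 h c Hg H Hw ltac:(lra) Hh0 Hh2 Hh3 ltac:(lra) ltac:(lra)).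
    assert (0 < sin g / 2 * (c - 0)) by (apply Rmult_lt_0_compat; lra). lra. }
  assert (Qa : Qf g psi T a < 0).
  { cut (Qf g psi T a < Qf g psi T 0); [lra|].
    apply (strict_nil (Qf g psi T) (dQ g psi T A) 0 a); [lra| |].
    - intros; apply (Q_cont g T A psi); auto.
    - intros c Hc'. split. apply (Q_deriv g T A psi c Hso (Hgood c ltac:(lra))).
      unfold dQ. rewrite (HA c) by lra. pose proof (Hx1 c ltac:(lra)).
      assert (0 < cos g * X1 psi T c) by (apply Rmult_lt_0_compat; lra). lra. }
  assert (Qab : forall c, a <= c <= b -> Qf g psi T c < 0).
  { intros c Hc'. cut (Qf g psi T c <= Qf g psi T a); [lra|].
    apply (mono_good A T (Qf g psi T) (dQ g psi T A) a c Hac); try lra.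
    - intros; apply (Q_cont g T A psi); auto.
    - intros c' Hc'' Hgd. split. apply (Q_deriv g T A psi c' Hso Hgd).
      pose proof (Hx1 c' ltac:(lra)).
      assert (0 <= cos g * X1 psi T c') by (apply Rmult_le_pos; lra).
      unfold dQ. destruct (A c'); lra. }
  assert (Hab : dd g psi T b - sin g * b < dd g psi T a - sin g * a).
  { apply (strict_nil (fun t => dd g psi T t - sin g * t)
      (fun t => sin g * X1 psi T t / rho g psi T t - sin g * 1) a b); [lra| |].
    - intros c Hc'. apply ccminus. apply (dd_cont g T A psi); auto. apply Hwr; lra. apply ccscal, ccid.
    - intros c Hc'. pose proof (Hwr c ltac:(lra)) as Hwc. split.
      + apply dminus. apply (dd_deriv g T A psi); auto. apply Hgood; lra. apply dscal, did.
      + pose proof (rho_pos g psi T c Hwc) as Hr.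
        pose proof (rho_sq g T A psi c H Hwc) as Hrs.
        pose proof (Qab c ltac:(lra)) as Hq.
        assert (Hxr : X1 psi T c < rho g psi T c).
        { destruct (Rlt_dec (X1 psi T c) (rho g psi T c)) as [|Hnn]; auto. exfalso.
          assert (rho g psi T c ^ 2 <= X1 psi T c ^ 2) by (apply pow_incr; lra). nra. }
        assert (X1 psi T c / rho g psi T c < 1).
        { apply (Rmult_lt_reg_r (rho g psi T c)); auto. field_simplify; lra. }
        assert (sin g * (X1 psi T c / rho g psi T c) < sin g * 1) by (apply Rmult_lt_compat_l; lra).
        unfold Rdiv in *. lra. }
  assert (Hdw : PI / 2 <= dd g psi T tw).
  { apply ddPI2. pose proof (Hwr tw Htw). lra. }
  assert (Hl2 : dd g psi T tw - dd g psi T b <= sin g * (tw - b)).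
  { apply (dd_lip g T A psi); auto; try lra. intros t Ht. apply Hwr; lra. }
  set (del := (dd g psi T a - sin g * a) - (dd g psi T b - sin g * b)).
  assert (Hdel : 0 < del) by (unfold del; lra).
  assert (PI / 2 + del <= sin g * tw).
  { apply le_eps. intros e He.
    set (h2 := Rmin h a).
    assert (Hh20 : 0 < h2) by (apply Rmin_glb_lt; lra).
    assert (Hh2h : h2 <= h) by apply Rmin_l. assert (Hh2a : h2 <= a) by apply Rmin_r.
    clearbody h2.
    destruct (small_start g T A psi 0 h2 Hg H Hw ltac:(lra) Hh20 ltac:(lra) ltac:(lra) ltac:(lra)
       ltac:(intros t Ht; apply Hwr; lra) (e / sin g) ltac:(apply Rdiv_lt_0_compat; lra)) as [t' [Ht' HUt']].
    assert (Hl1 : dd g psi T a - dd g psi T t' <= sin g * (a - t')).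
    { apply (dd_lip g T A psi); auto; try lra. intros t Ht. apply Hwr; lra. }
    pose proof (dd_le_U g psi T t' Hg).
    assert (sin g * Uf g psi T t' <= sin g * (e / sin g)) by (apply Rmult_le_compat_l; lra).
    replace (sin g * (e / sin g)) with e in H1 by (field; lra).
    assert (0 <= sin g * t') by (apply Rmult_le_pos; lra).
    unfold del in *. lra. }
  lra.
Qed.

Lemma main_bound g T A psi ep : 0 < g < PI / 2 -> admissible g T A psi -> 0 < ep ->
  (forall t, 0 < t < ep -> A t = false) -> PI / 2 / sin g < T.
Proof.
  intros Hg H Hep HA. pose proof (sc_pos g Hg) as [Hs Hc].
  destruct (first_hit g T A psi Hg H) as [T1 [HT1 [HP2 Hpos]]].
  destruct (last_visit g T A psi T1 Hg H HT1 HP2) as [t0 [Ht0 [Hw Hn]]].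
  assert (Key : forall x, PI / 2 <= sin g * x -> PI / 2 / sin g <= x).
  { intros x Hx. apply (Rmult_le_reg_r (sin g)); auto.
    replace (PI / 2 / sin g * sin g) with (PI / 2) by (field; lra). lra. }
  assert (Key' : forall x, PI / 2 < sin g * x -> PI / 2 / sin g < x).
  { intros x Hx. apply (Rmult_lt_reg_r (sin g)); auto.
    replace (PI / 2 / sin g * sin g) with (PI / 2) by (field; lra). lra. }
  destruct (classic (exists tw, t0 < tw <= T1 /\ Wf g psi T tw <= 0)) as [[tw [Htw Hww]]|Hno].
  - destruct (Req_dec t0 0) as [E|Hne].
    + subst t0. pose proof (caseI_strict g T A psi T1 tw ep Hg H HT1 HP2 Hpos Hw Hn Htw Hww Hep HA).
      pose proof (Key' tw H0). lra.
    + pose proof (caseI g T A psi T1 t0 tw Hg H HT1 HP2 Hpos Ht0 Hw Hn Htw Hww).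
      pose proof (Key _ H0). lra.
  - assert (Hwp : forall t, t0 < t <= T1 -> 0 < Wf g psi T t).
    { intros t Ht. destruct (Rlt_dec 0 (Wf g psi T t)) as [|Hx]; auto. exfalso. apply Hno.
      exists t. split; auto; lra. }
    pose proof (caseII g T A psi T1 t0 Hg H HT1 HP2 Hpos Ht0 Hw Hn Hwp) as HII.
    pose proof (tan_gt g Hg) as Htg.
    assert (Hg2 : g / sin g < / cos g).
    { apply (Rmult_lt_reg_r (sin g * cos g)). nra.
      replace (g / sin g * (sin g * cos g)) with (g * cos g) by (field; lra).
      replace (/ cos g * (sin g * cos g)) with (sin g) by (field; lra). lra. }
    replace ((PI / 2 - g) / sin g) with (PI / 2 / sin g - g / sin g) in HII by (field; lra).
    lra.
Qed.


Lemma gap (l : list R) : exists ep, 0 < ep /\ forall x, In x l -> 0 < x -> ep <= x.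
Proof.
  induction l as [|y l [ep [Hep IH]]].
  - exists 1. split; [lra|]. intros x [].
  - destruct (Rlt_dec 0 y) as [Hy|Hy].
    + exists (Rmin ep y). split. apply Rmin_glb_lt; lra.
      intros x [E|Hx] Hx0. subst; apply Rmin_r. eapply Rle_trans; [apply Rmin_l|]. apply IH; auto.
    + exists ep. split; auto. intros x [E|Hx] Hx0. subst; lra. apply IH; auto.
Qed.

Definition ind (A : R -> bool) (t : R) : R := if A t then 1 else 0.

Lemma const_start A T : admissible_control A T -> 0 < T ->
  exists ep, 0 < ep <= T /\ forall t, 0 < t < ep -> A t = A (ep / 2).
Proof.
  intros [l Hl] HT. destruct (gap l) as [ep0 [Hep0 Hg]].
  set (ep := Rmin ep0 T).
  assert (Hep : 0 < ep) by (apply Rmin_glb_lt; lra).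
  assert (Hep1 : ep <= ep0) by apply Rmin_l. assert (Hep2 : ep <= T) by apply Rmin_r.
  clearbody ep. exists ep. split; [lra|].
  assert (Hd : forall c, 0 < c < ep -> derivable_pt_lim (ind A) c 0).
  { intros c Hc.
    assert (Hlc : loc_const A T c).
    { apply NNPP. intros Hn. assert (In c l) by (apply Hl; split; [lra|auto]).
      pose proof (Hg c H ltac:(lra)). lra. }
    destruct Hlc as [d [Hd Hd']].
    set (d' := Rmin d (Rmin c (T - c))).
    assert (Hd'0 : 0 < d'). { unfold d'. apply Rmin_glb_lt; [lra|]. apply Rmin_glb_lt; lra. }
    assert (E1 : d' <= d) by apply Rmin_l.
    assert (E2 : d' <= c) by (eapply Rle_trans; [apply Rmin_r|apply Rmin_l]).
    assert (E3 : d' <= T - c) by (eapply Rle_trans; [apply Rmin_r|apply Rmin_r]).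
    clearbody d'.
    apply (derivable_pt_lim_locally_ext (fun _ => ind A c) _ c (c - d') (c + d')); [lra| |apply dconst].
    intros z Hz. unfold ind. rewrite (Hd' z); auto; try lra.
    unfold Rabs; destruct Rcase_abs; lra. }
  assert (Hcst : forall a b, 0 < a -> a <= b -> b < ep -> ind A a = ind A b).
  { intros a b Ha Hab Hb.
    assert (Hc : forall c, a <= c <= b -> continuity_pt (ind A) c).
    { intros c Hc. apply derivable_continuous_pt. exists 0. apply Hd; lra. }
    assert (ind A b <= ind A a).
    { apply (mono_nil (ind A) (fun _ => 0) a b); auto. intros c Hc'. split; [apply Hd; lra|lra]. }
    assert ((fun t => - ind A t) b <= (fun t => - ind A t) a).
    { apply (mono_nil (fun t => - ind A t) (fun _ => - 0) a b); auto.
      intros c Hc'. apply ccopp; auto. intros c Hc'. split; [apply dopp, Hd; lra|lra]. }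
    simpl in *. lra. }
  intros t Ht.
  assert (Hi : ind A t = ind A (ep / 2)).
  { destruct (Rle_dec t (ep / 2)). apply Hcst; lra. symmetry. apply Hcst; lra. }
  unfold ind in Hi. destruct (A t), (A (ep / 2)); auto; lra.
Qed.

Definition psiX (g : R) (t : R) : vec := fun i =>
  match i with
  | 0%nat => sin (sin g * t)
  | 1%nat => sin g * cos (sin g * t)
  | 2%nat => cos g * cos (sin g * t)
  | _ => 0
  end.

Lemma dsinl a t : derivable_pt_lim (fun y => sin (a * y)) t (cos (a * t) * (a * 1)).
Proof. apply (dcomp (fun y => a * y) sin). apply dscal, did. apply derivable_pt_lim_sin. Qed.
Lemma dcosl a t : derivable_pt_lim (fun y => cos (a * y)) t (- sin (a * t) * (a * 1)).
Proof. apply (dcomp (fun y => a * y) cos). apply dscal, did. apply derivable_pt_lim_cos. Qed.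

Lemma psiX_deriv g i t : (i < 3)%nat ->
  derivable_pt_lim (fun y => psiX g y i) t (mv (matA g true) (psiX g t) i).
Proof.
  intros Hi. pose proof (sc1 g) as E.
  destruct i as [|[|[|i]]]; [| | |lia]; unfold mv, matA, matX, psiX; simpl.
  - apply (dext _ _ _ _ (dsinl (sin g) t)).
    transitivity (sin g * (sin g ^ 2 + cos g ^ 2) * cos (sin g * t)); [rewrite E|]; ring.
  - apply (dext _ _ _ _ (dscal (sin g) _ _ _ (dcosl (sin g) t))). ring.
  - apply (dext _ _ _ _ (dscal (cos g) _ _ _ (dcosl (sin g) t))). ring.
Qed.

Lemma psiX_adm g : 0 < g < PI / 2 -> admissible g (PI / 2 / sin g) (fun _ => true) (psiX g).
Proof.
  intros Hg. pose proof (sc_pos g Hg) as [Hs Hc]. pose proof PI_RGT_0.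
  assert (HT : 0 <= PI / 2 / sin g) by (apply Rlt_le, Rdiv_lt_0_compat; lra).
  split; [auto|]. split; [|split; [|split]].
  - exists nil. intros t [_ Hn]. exfalso. apply Hn. exists 1. split; [lra|]. auto.
  - split.
    + intros i t eps Hi Ht Heps.
      assert (Hc' : continuity_pt (fun y => psiX g y i) t).
      { apply derivable_continuous_pt. exists (mv (matA g true) (psiX g t) i). apply psiX_deriv; auto. }
      destruct (cont_eps _ t Hc' eps Heps) as [d [Hd Hd']]. exists d. split; auto.
    + intros t Ht _ i Hi. apply psiX_deriv; auto.
  - intros i. unfold psiX, psi0. destruct i as [|[|[|i]]]; try rewrite Rmult_0_r; try rewrite sin_0; try rewrite cos_0; ring.
  - unfold inSigma, ip, e3, psiX. simpl.
    replace (sin g * (PI / 2 / sin g)) with (PI / 2) by (field; lra). rewrite cos_PI2. ring.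
Qed.


Theorem lemmaA2 (g T : R) (A : R -> bool) (psi p : R -> vec) :
  0 < g < PI / 2 ->
  regular g T A psi p ->
  time_optimal g T A psi ->
  exists delta, 0 < delta <= T /\ forall t, 0 < t < delta -> A t = true.
Proof.
  intros Hg _ [Hadm Hopt].
  pose proof (Hopt _ _ _ (psiX_adm g Hg)) as Hle.
  destruct (first_hit g T A psi Hg Hadm) as [T1 [HT1 _]].
  pose proof Hadm as [_ [Hac _]].
  destruct (const_start A T Hac ltac:(lra)) as [ep [Hep Hc]].
  destruct (A (ep / 2)) eqn:E.
  - exists ep. split; auto.
  - exfalso. assert (PI / 2 / sin g < T).
    { apply (main_bound g T A psi ep Hg Hadm); [lra|]. intros t Ht. rewrite (Hc t Ht); auto. }
    lra.
Qed.
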